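(* Let $X_r$ be a Dynkin diagram of finite type with dual Coxeter number $h^\vee$ and involution $\omega$. (i) In the abelian group $\mathcal{T}_0(X_r)$: $T^{(a)}(u+h^\vee)=T^{(\omega(a))}(u)^{-1}$ and $T^{(a)}(u+2h^\vee)=T^{(a)}(u)$ for all $a\in I$, $u\in\frac1t\mathbb{Z}$. (ii) In the abelian group $\mathcal{Y}_0(X_r)$: $Y^{(a)}(u+h^\vee)=Y^{(\omega(a))}(u)^{-1}$ and $Y^{(a)}(u+2h^\vee)=Y^{(a)}(u)$ for all $a\in I$, $u\in\frac1t\mathbb{Z}$.
   Context: Enumeration of $I=\{1,\dots,r\}$: $A_r$: chain; $B_r$: chain with double bond between $r-1,r$, $\alpha_r$ short; $C_r$: same, $\alpha_r$ long, others short; $D_r$: chain $1-\cdots-(r-2)$, $r-1,r$ joined to $r-2$; $E_6$: chain $1-2-3-5-6$, $4$ joined to $3$; $E_7$: chain $1-\cdots-6$, $7$ joined to $3$; $E_8$: chain $1-\cdots-7$, $8$ joined to $5$; $F_4$: chain $1-2-3-4$, double bond between $2,3$, $\alpha_1,\alpha_2$ long; $G_2$: $\alpha_1$ long. $C$ is the Cartan matrix; $t=1$ (simply laced), $2$ ($B_r,C_r,F_4$), $3$ ($G_2$). $h^\vee$: $A_r$: $r+1$, $B_r$: $2r-1$, $C_r$: $r+1$, $D_r$: $2r-2$, $E_6$: 12, $E_7$: 18, $E_8$: 30, $F_4$: 9, $G_2$: 4. $\omega$ is the identity except: $\omega(a)=r+1-a$ for $A_r$; $\omega$ swaps $r-1,r$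 for $D_r$ with $r$ odd; $\omega$ swaps $1\leftrightarrow6$, $2\leftrightarrow5$ for $E_6$. $\mathcal{T}_0(X_r)$ is the abelian group (written multiplicatively) generated by $T^{(a)}(u)$ ($a\in I$, $u\in\frac1t\mathbb{Z}$) with relations (with $T^{(0)}(u)=1$): simply laced: $T^{(a)}(u-1)T^{(a)}(u+1)=\prod_{b:C_{ab}=-1}T^{(b)}(u)$; $B_r$: $T^{(a)}(u-1)T^{(a)}(u+1)=T^{(a-1)}(u)T^{(a+1)}(u)$ ($a\le r-2$), $T^{(r-1)}(u-1)T^{(r-1)}(u+1)=T^{(r-2)}(u)T^{(r)}(u)$, $T^{(r)}(u-\frac12)T^{(r)}(u+\frac12)=T^{(r-1)}(u-\frac12)T^{(r-1)}(u+\frac12)$; $C_r$: $T^{(a)}(u-\frac12)T^{(a)}(u+\frac12)=T^{(a-1)}(u)T^{(a+1)}(u)$ ($a\le r-2$), $T^{(r-1)}(u-\frac12)T^{(r-1)}(u+\frac12)=T^{(r-2)}(u)T^{(r)}(u-\frac12)T^{(r)}(u+\frac12)$, $T^{(r)}(u-1)T^{(r)}(u+1)=T^{(r-1)}(u)$; $F_4$: $T^{(1)}(u-1)T^{(1)}(u+1)=T^{(2)}(u)$, $T^{(2)}(u-1)T^{(2)}(u+1)=T^{(1)}(u)T^{(3)}(u)$, $T^{(3)}(u-\frac12)T^{(3)}(u+\frac12)=T^{(2)}(u-\frac12)T^{(2)}(u+\frac12)T^{(4)}(u)$, $T^{(4)}(u-\frac12)T^{(4)}(u+\frac12)=T^{(3)}(u)$;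 $G_2$: $T^{(1)}(u-1)T^{(1)}(u+1)=T^{(2)}(u)$, $T^{(2)}(u-\frac13)T^{(2)}(u+\frac13)=T^{(1)}(u-\frac23)T^{(1)}(u)T^{(1)}(u+\frac23)$. $\mathcal{Y}_0(X_r)$ is the abelian group generated by $Y^{(a)}(u)$ with relations (with $Y^{(0)}(u)=1$): simply laced: $Y^{(a)}(u-1)Y^{(a)}(u+1)=\prod_{b:C_{ab}=-1}Y^{(b)}(u)$; $B_r$: $Y^{(a)}(u-1)Y^{(a)}(u+1)=Y^{(a-1)}(u)Y^{(a+1)}(u)$ ($a\le r-2$), $Y^{(r-1)}(u-1)Y^{(r-1)}(u+1)=Y^{(r-2)}(u)Y^{(r)}(u-\frac12)Y^{(r)}(u+\frac12)$, $Y^{(r)}(u-\frac12)Y^{(r)}(u+\frac12)=Y^{(r-1)}(u)$; $C_r$: $Y^{(a)}(u-\frac12)Y^{(a)}(u+\frac12)=Y^{(a-1)}(u)Y^{(a+1)}(u)$ ($a\le r-2$), $Y^{(r-1)}(u-\frac12)Y^{(r-1)}(u+\frac12)=Y^{(r-2)}(u)Y^{(r)}(u)$, $Y^{(r)}(u-1)Y^{(r)}(u+1)=Y^{(r-1)}(u-\frac12)Y^{(r-1)}(u+\frac12)$; $F_4$: $Y^{(1)}(u-1)Y^{(1)}(u+1)=Y^{(2)}(u)$, $Y^{(2)}(u-1)Y^{(2)}(u+1)=Y^{(1)}(u)Y^{(3)}(u-\frac12)Y^{(3)}(u+\frac12)$, $Y^{(3)}(u-\frac12)Y^{(3)}(u+\frac12)=Y^{(2)}(u)Y^{(4)}(u)$,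 $Y^{(4)}(u-\frac12)Y^{(4)}(u+\frac12)=Y^{(3)}(u)$; $G_2$: $Y^{(1)}(u-1)Y^{(1)}(u+1)=Y^{(2)}(u-\frac23)Y^{(2)}(u)Y^{(2)}(u+\frac23)$, $Y^{(2)}(u-\frac13)Y^{(2)}(u+\frac13)=Y^{(1)}(u)$. *)

(* Defs.v *)
From mathcomp Require Import all_boot all_algebra.
Set Implicit Arguments. Unset Strict Implicit. Unset Printing Implicit Defensive.
Import GRing.Theory.
Local Open Scope ring_scope.

Inductive Dynkin := TA of nat | TB of nat | TC of nat | TD of nat
                  | TE6 | TE7 | TE8 | TF4 | TG2.

Definition rank (d : Dynkin) : nat :=
  match d with TA r | TB r | TC r | TD r => r
  | TE6 => 6 | TE7 => 7 | TE8 => 8 | TF4 => 4 | TG2 => 2 end.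

Definition valid_dynkin (d : Dynkin) : bool :=
  match d with TA r => (1 <= r)%N | TB r => (2 <= r)%N | TC r => (2 <= r)%N
  | TD r => (4 <= r)%N | _ => true end.

Definition tnum (d : Dynkin) : nat :=
  match d with TB _ | TC _ | TF4 => 2 | TG2 => 3 | _ => 1 end.

Definition hdual (d : Dynkin) : nat :=
  match d with TA r => r.+1 | TB r => (2 * r - 1)%N | TC r => r.+1
  | TD r => (2 * r - 2)%N | TE6 => 12 | TE7 => 18 | TE8 => 30
  | TF4 => 9 | TG2 => 4 end.

Definition omega (d : Dynkin) (a : nat) : nat :=
  match d with
  | TA r => (r.+1 - a)%N
  | TD r => if odd r then (if a == r.-1 then r else if a == r then r.-1 else a)
            else a
  | TE6 => match a with 1 => 6%N | 2 => 5%N | 5 => 2%N | 6 => 1%N | _ => a end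
  | _ => a end.

(* edges of the simply laced diagrams (C_ab = -1 iff {a,b} is an edge) *)
Definition sl_edges (d : Dynkin) : seq (nat * nat) :=
  match d with
  | TA r => [seq (i, i.+1) | i <- iota 1 r.-1]
  | TD r => [seq (i, i.+1) | i <- iota 1 (r - 3)] ++ [:: (r - 2, r - 1); (r - 2, r)]%N
  | TE6 => [:: (1, 2); (2, 3); (3, 5); (5, 6); (3, 4)]%N
  | TE7 => [seq (i, i.+1) | i <- iota 1 5] ++ [:: (3, 7)]%N
  | TE8 => [seq (i, i.+1) | i <- iota 1 6] ++ [:: (5, 8)]%N
  | _ => [::] end.

Definition adj (d : Dynkin) (a b : nat) : bool :=
  ((a, b) \in sl_edges d) || ((b, a) \in sl_edges d).

(* The spectral parameter u in (1/t)Z is encoded by k : int with u = k / t.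
   The abelian groups are written additively (product -> sum, 1 -> 0,
   inverse -> opposite).  F a k stands for T^{(a)}(k/t) (resp. Y^{(a)}(k/t)). *)

(* convention T^{(0)}(u) = 1 *)
Definition Fz (G : zmodType) (F : nat -> int -> G) (a : nat) (k : int) : G :=
  if a == 0%N then 0 else F a k.

Definition T_rel (d : Dynkin) (G : zmodType) (T : nat -> int -> G)
    (a : nat) (k : int) : Prop :=
  match d with
  | TB r =>
      if (a <= r - 2)%N then T a (k - 2) + T a (k + 2) = Fz T a.-1 k + T a.+1 k
      else if a == r.-1 then T a (k - 2) + T a (k + 2) = Fz T (r - 2) k + T r k
      else T r (k - 1) + T r (k + 1) = T r.-1 (k - 1) + T r.-1 (k + 1)
  | TC r =>
      if (a <= r - 2)%N then T a (k - 1) + T a (k + 1) = Fz T a.-1 k + T a.+1 k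
      else if a == r.-1 then
        T a (k - 1) + T a (k + 1) = Fz T (r - 2) k + T r (k - 1) + T r (k + 1)
      else T r (k - 2) + T r (k + 2) = T r.-1 k
  | TF4 =>
      match a with
      | 1 => T 1%N (k - 2) + T 1%N (k + 2) = T 2%N k
      | 2 => T 2%N (k - 2) + T 2%N (k + 2) = T 1%N k + T 3%N k
      | 3 => T 3%N (k - 1) + T 3%N (k + 1) = T 2%N (k - 1) + T 2%N (k + 1) + T 4%N k
      | _ => T 4%N (k - 1) + T 4%N (k + 1) = T 3%N k
      end
  | TG2 =>
      match a with
      | 1 => T 1%N (k - 3) + T 1%N (k + 3) = T 2%N k
      | _ => T 2%N (k - 1) + T 2%N (k + 1) = T 1%N (k - 2) + T 1%N k + T 1%N (k + 2)
      end
  | _ => T a (k - 1) + T a (k + 1) = \sum_(b <- iota 1 (rank d) | adj d a b) T b k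
  end.

Definition Y_rel (d : Dynkin) (G : zmodType) (Y : nat -> int -> G)
    (a : nat) (k : int) : Prop :=
  match d with
  | TB r =>
      if (a <= r - 2)%N then Y a (k - 2) + Y a (k + 2) = Fz Y a.-1 k + Y a.+1 k
      else if a == r.-1 then
        Y a (k - 2) + Y a (k + 2) = Fz Y (r - 2) k + Y r (k - 1) + Y r (k + 1)
      else Y r (k - 1) + Y r (k + 1) = Y r.-1 k
  | TC r =>
      if (a <= r - 2)%N then Y a (k - 1) + Y a (k + 1) = Fz Y a.-1 k + Y a.+1 k
      else if a == r.-1 then Y a (k - 1) + Y a (k + 1) = Fz Y (r - 2) k + Y r k
      else Y r (k - 2) + Y r (k + 2) = Y r.-1 (k - 1) + Y r.-1 (k + 1)
  | TF4 =>
      match a with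
      | 1 => Y 1%N (k - 2) + Y 1%N (k + 2) = Y 2%N k
      | 2 => Y 2%N (k - 2) + Y 2%N (k + 2) = Y 1%N k + Y 3%N (k - 1) + Y 3%N (k + 1)
      | 3 => Y 3%N (k - 1) + Y 3%N (k + 1) = Y 2%N k + Y 4%N k
      | _ => Y 4%N (k - 1) + Y 4%N (k + 1) = Y 3%N k
      end
  | TG2 =>
      match a with
      | 1 => Y 1%N (k - 3) + Y 1%N (k + 3) = Y 2%N (k - 2) + Y 2%N k + Y 2%N (k + 2)
      | _ => Y 2%N (k - 1) + Y 2%N (k + 1) = Y 1%N k
      end
  | _ => Y a (k - 1) + Y a (k + 1) = \sum_(b <- iota 1 (rank d) | adj d a b) Y b k
  end.

Definition is_T_system (d : Dynkin) (G : zmodType) (T : nat -> int -> G) : Prop :=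
  forall (a : nat) (k : int), (1 <= a <= rank d)%N -> T_rel d T a k.

Definition is_Y_system (d : Dynkin) (G : zmodType) (Y : nat -> int -> G) : Prop :=
  forall (a : nat) (k : int), (1 <= a <= rank d)%N -> Y_rel d Y a k.

(* Main.v *)
Require Import Defs.
From mathcomp Require Import all_boot all_algebra.
Import GRing.Theory.
Local Open Scope ring_scope.
From mathcomp Require Import ring zify.
Set Implicit Arguments. Unset Strict Implicit. Unset Printing Implicit Defensive.

Section W.
Variable G : zmodType.

Definition W (g : int -> G) (s : int) (n : nat) (c : int) : G :=
  \sum_(j < n) g (c + s * (2 * j%:Z - n%:Z + 1)).

Lemma WL g s n c : W g s n.+1 c = g (c - s * n%:Z) + W g s n (c + s).
Proof.
rewrite /W big_ord_recl; congr (_ + _).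
  by congr g; rewrite /= intS; ring.
apply: eq_bigr => j _; congr g.
rewrite /= /bump /= add1n !intS; ring.
Qed.

Lemma WR g s n c : W g s n.+1 c = W g s n (c - s) + g (c + s * n%:Z).
Proof.
rewrite /W big_ord_recr; congr (_ + _).
  by apply: eq_bigr => j _; congr g; rewrite /= intS; ring.
by congr g; rewrite /= intS; ring.
Qed.

Lemma W0 g s c : W g s 0 c = 0.
Proof. by rewrite /W big_ord0. Qed.

Lemma W_shift g s n c e : W g s n (c + e) = W (fun x => g (x + e)) s n c.
Proof. by apply: eq_bigr => j _; congr g; ring. Qed.

Lemma W_ext g1 g2 s n c : (forall x, g1 x = g2 x) -> W g1 s n c = W g2 s n c.
Proof. by move=> H; apply: eq_bigr => j _. Qed.

Lemma W_opp g s n c : W (fun x => - g x) s n c = - W g s n c.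
Proof. by rewrite /W sumrN. Qed.

Lemma W_split g s n1 n2 c :
  W g s (n1 + n2) c = W g s n1 (c - s * n2%:Z) + W g s n2 (c + s * n1%:Z).
Proof.
elim: n2 c => [|n2 IH] c.
  by rewrite addn0 W0 addr0 mulr0 subr0.
rewrite addnS WR IH WR addrA; congr (_ + _ + _).
- by congr (W _ _ _ _); rewrite intS; ring.
- by congr (W _ _ _ _); ring.
- by congr g; rewrite PoszD; ring.
Qed.

Lemma Wrec g s n c :
  W g s n.+2 c = W g s n.+1 (c - s) + W g s n.+1 (c + s) - W g s n c.
Proof.
rewrite WL [W g s n.+1 (c - s)]WL subrK (addrAC _ (W g s n.+1 (c + s))) addrK.
by congr (_ + _); congr g; rewrite intS; ring.
Qed.

Definition chain_rel (x : nat -> int -> G) (s : int) (m : nat) :=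
  forall a k, (1 <= a <= m)%N -> x a (k - s) + x a (k + s) = x a.-1 k + x a.+1 k.

Lemma chain_fwd x s m : chain_rel x s m -> (forall k, x 0%N k = 0) ->
  forall a, (a <= m.+1)%N -> forall k, x a k = W (x 1%N) s a k.
Proof.
move=> Hr H0.
suff: forall a, (a <= m)%N -> (forall k, x a k = W (x 1%N) s a k) /\
                              (forall k, x a.+1 k = W (x 1%N) s a.+1 k).
  move=> H a; case: a => [|a] Ha k; first by rewrite H0 W0.
  by case: (H a Ha) => _ ->.
elim=> [|a IH] Ha.
  split=> k; first by rewrite H0 W0.
  by rewrite WR W0 add0r mulr0 addr0.
case: (IH (ltnW Ha)) => H1 H2; split=> //.
move=> k.
have := Hr a.+1 k; rewrite /= Ha => /(_ isT) E.
apply: (addrI (x a k)); rewrite -E !H2 H1 Wrec [RHS]addrC subrK //.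
Qed.

Lemma chain_uniq x y s m : chain_rel x s m -> chain_rel y s m ->
  (forall k, x m k = y m k) -> (forall k, x m.+1 k = y m.+1 k) ->
  forall a, (a <= m.+1)%N -> forall k, x a k = y a k.
Proof.
move=> Hx Hy Hm Hm1.
suff H: forall j, (j <= m)%N -> (forall k, x (m - j)%N k = y (m - j)%N k) /\
    (forall k, x (m - j).+1 k = y (m - j).+1 k).
  move=> a Ha; case: (ltngtP a m.+1) Ha => // [lt _|-> _]; last exact: Hm1.
  have := H (m - a)%N (leq_subr _ _); rewrite subKn //; by case.
elim=> [|j IH] Hj; first by rewrite subn0.
case: (IH (ltnW Hj)) => H1 H2.
have E: (m - j)%N = (m - j.+1).+1 by rewrite subnS prednK // subn_gt0.
rewrite -E; split=> // k.
have := Hx (m - j)%N k; have := Hy (m - j)%N k.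
have Ha: (1 <= m - j <= m)%N by rewrite leq_subr andbT subn_gt0.
move=> /(_ Ha) Ey /(_ Ha) Ex.
rewrite E /= -E in Ex Ey.
apply: (addIr (x (m - j).+1 k)); rewrite -Ex H1 H1 H2 Ey //.
Qed.
End W.

Section Sums.
Variable G : zmodType.

Lemma sum_filter_mem (s cs : seq nat) (P : pred nat) (F : nat -> G) :
  uniq s -> uniq cs -> (forall b, b \in s -> P b = (b \in cs)) ->
  \sum_(b <- s | P b) F b = \sum_(c <- cs | c \in s) F c.
Proof.
move=> us ucs H; rewrite -big_filter -[RHS]big_filter; apply: perm_big.
apply: uniq_perm; rewrite ?filter_uniq // => b; rewrite !mem_filter.
by case Hb: (b \in s); rewrite ?andbF ?andbT // H.
Qed.

Lemma mem_pairs (s : seq nat) x y :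
  ((x, y) \in [seq (i, i.+1) | i <- s]) = (y == x.+1) && (x \in s).
Proof.
elim: s => [|i s IH] /=; first by rewrite in_nil andbF.
rewrite in_cons IH xpair_eqE in_cons.
by case: (x =P i) => [->|_] /=; case: (y == _).
Qed.
End Sums.

Section FamA.
Variable G : zmodType.
Variable T : nat -> int -> G.
Variable m : nat.
Hypothesis HT : forall a k, (1 <= a <= m.+1)%N ->
  T a (k - 1) + T a (k + 1) = \sum_(b <- iota 1 m.+1 | adj (TA m.+1) a b) T b k.

Let x a k := if (1 <= a <= m.+1)%N then T a k else 0.

Lemma famA_chain : chain_rel x 1 m.+1.
Proof.
move=> a k Ha; rewrite /x Ha HT //.
rewrite (@sum_filter_mem _ _ [:: a.-1; a.+1]) ?iota_uniq //; last first.
  move=> b; rewrite mem_iota /adj !mem_pairs !mem_iota !inE => Hb.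
  by apply/idP/idP; lia.
  by rewrite /= inE; apply/negP; lia.
rewrite !big_cons big_nil !mem_iota add1n !ltnS.
by case: ifP => _; case: ifP => _; rewrite ?addr0 ?add0r.
Qed.

Lemma famA a k : (1 <= a <= m.+1)%N ->
  T a (k + (m.+2)%:Z) = - T (m.+2 - a)%N k.
Proof.
move=> Ha.
have Hc := chain_fwd famA_chain.
have H0 : forall k, x 0%N k = 0 by [].
have Z : forall k, W (x 1%N) 1 m.+2 k = 0.
  by move=> k'; rewrite -(Hc H0) //= /x /= ltnn.
have Ha2 : (a <= m.+2)%N by lia.
have E := W_split (x 1%N) 1 (m.+2 - a) a (k + a%:Z).
rewrite subnK // Z in E.
have E1 : k + a%:Z - 1 * a%:Z = k by ring.
have E2 : k + a%:Z + 1 * (m.+2 - a)%N%:Z = k + m.+2%:Z by rewrite -subzn //; ring.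
rewrite E1 E2 in E.
have -> : T a (k + m.+2%:Z) = x a (k + m.+2%:Z) by rewrite /x Ha.
have -> : T (m.+2 - a)%N k = x (m.+2-a)%N k by rewrite /x ifT //; lia.
rewrite !Hc //; last by lia.
by apply: (addIr (W (x 1%N) 1 (m.+2 - a) k)); rewrite addNr addrC -E.
Qed.
End FamA.

Section Anti.
Variable G : zmodType.
Lemma W_anti (g : int -> G) s n N k : (forall j, g (j + N) = - g j) ->
  W g s n (k + N) = - W g s n k.
Proof. by move=> H; rewrite W_shift (W_ext _ _ _ H) W_opp. Qed.

Lemma anti_of (g : int -> G) e : (forall k, g (k - e) + g (k + e) = 0) ->
  forall j, g (j + (e + e)) = - g j.
Proof.
move=> H j; have := H (j + e); rewrite addrK addrA => /eqP.
by rewrite addr_eq0 => /eqP ->; rewrite opprK.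
Qed.
End Anti.

Section FamW.
Variable G : zmodType.
Variable T : nat -> int -> G.
Variables (m : nat) (s p : int).
Hypothesis H1 : forall a k, (1 <= a <= m.+1)%N ->
  T a (k - s) + T a (k + s) = Fz T a.-1 k + T a.+1 k.
Hypothesis H2 : forall k,
  T m.+2 (k - p) + T m.+2 (k + p) = T m.+1 (k - (p - s)) + T m.+1 (k + (p - s)).

Lemma famW a k : (1 <= a <= m.+2)%N ->
  T a (k + ((p + s * m.+1%:Z) + (p + s * m.+1%:Z))) = - T a k.
Proof.
move=> Ha.
pose x b := Fz T b.
have Hc : chain_rel x s m.+1.
  move=> b k' Hb; rewrite /x /Fz.
  have -> : (b == 0%N) = false by lia.
  have -> : (b.+1 == 0%N) = false by [].
  exact: H1.
have H0 : forall k, x 0%N k = 0 by [].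
have Hx := chain_fwd Hc H0.
have Ex : forall b k, (1 <= b)%N -> T b k = x b k.
  by move=> b k' Hb; rewrite /x /Fz; case: eqP => // E; rewrite E in Hb.
have Hg : forall k, x 1%N (k - (p + s * m.+1%:Z)) + x 1%N (k + (p + s * m.+1%:Z)) = 0.
  move=> k'; have E := H2 k'.
  rewrite !Ex // (Hx m.+2) // (Hx m.+2) // (Hx m.+1) // (Hx m.+1) // in E.
  rewrite [W _ _ m.+2 (k' - p)]WL [W _ _ m.+2 (k' + p)]WR in E.
  have E1 : k' - p - s * m.+1%:Z = k' - (p + s * m.+1%:Z) by ring.
  have E2 : k' + p + s * m.+1%:Z = k' + (p + s * m.+1%:Z) by ring.
  have E3 : k' - p + s = k' - (p - s) by ring.
  have E4 : k' + p - s = k' + (p - s) by ring.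
  rewrite E1 E2 E3 E4 [W _ _ m.+1 (k' + _) + _]addrC addrACA in E.
  by apply: (addIr (W (x 1%N) s m.+1 (k' - (p - s)) + W (x 1%N) s m.+1 (k' + (p - s)))); rewrite add0r.
rewrite Ex ?Ex; [|lia|lia].
rewrite !Hx; [|lia|lia].
by apply: W_anti; apply: anti_of.
Qed.
End FamW.

Section Refl.
Variable G : zmodType.
Definition refl (f : int -> G) (s e0 : int) (a : nat) (k : int) :=
  f (k - (e0 - s * a%:Z)) + f (k + (e0 - s * a%:Z)).

Lemma refl_chain f s e0 m : chain_rel (refl f s e0) s m.
Proof.
move=> a k Ha; rewrite /refl.
have -> : (a.-1)%:Z = a%:Z - 1 by case: a Ha => // a' _; rewrite /= intS; ring.
rewrite intS.
set E := e0 - s * a%:Z.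
have -> : k - (e0 - s * (a%:Z - 1)) = k - s - E by rewrite /E; ring.
have -> : k + (e0 - s * (a%:Z - 1)) = k + s + E by rewrite /E; ring.
have -> : k - (e0 - s * (1 + a%:Z)) = k + s - E by rewrite /E; ring.
have -> : k + (e0 - s * (1 + a%:Z)) = k - s + E by rewrite /E; ring.
rewrite [LHS]addrACA [RHS]addrACA; congr (_ + _); exact: addrC.
Qed.

Lemma refl_anti f s e0 N a k : (forall j, f (j + N) = - f j) ->
  refl f s e0 a (k + N) = - refl f s e0 a k.
Proof.
move=> H; rewrite /refl [RHS]opprD -!H; congr (f _ + f _); ring.
Qed.
End Refl.

Section FamR.
Variable G : zmodType.
Variable Y : nat -> int -> G.
Variables (m : nat) (s q : int).
Hypothesis H1 : forall a k, (1 <= a <= m)%N ->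
  Y a (k - s) + Y a (k + s) = Fz Y a.-1 k + Y a.+1 k.
Hypothesis H2 : forall k, Y m.+1 (k - s) + Y m.+1 (k + s) =
  Fz Y m k + (Y m.+2 (k - (q - s)) + Y m.+2 (k + (q - s))).
Hypothesis H3 : forall k, Y m.+2 (k - q) + Y m.+2 (k + q) = Y m.+1 k.

Lemma famR a k : (1 <= a <= m.+2)%N ->
  Y a (k + ((q + s * m.+1%:Z) + (q + s * m.+1%:Z))) = - Y a k.
Proof.
move=> Ha.
set e0 := q + s * m.+1%:Z.
pose Z k := Y m.+2 (k - (q - s)) + Y m.+2 (k + (q - s)).
pose x b := if b == m.+2 then Z else Fz Y b.
have Hc : chain_rel x s m.+1.
  move=> b k' Hb; rewrite /x.
  have -> : (b == m.+2) = false by lia.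
  have -> : (b.-1 == m.+2) = false by lia.
  case: (ltngtP b m.+1) => [lt|gt|Eb]; last 1 first.
    by rewrite Eb eqxx H2 /Fz /=.
    2: by lia.
    have -> : (b.+1 == m.+2) = false by lia.
    have -> : Fz Y b = Y b by rewrite /Fz; case: eqP => // E; rewrite E in Hb.
    apply: H1; lia.
have Hu := chain_uniq Hc (@refl_chain _ (Y m.+2) s e0 m.+1).
have Hm : forall k, x m.+1 k = refl (Y m.+2) s e0 m.+1 k.
  move=> k'; rewrite /x /refl /Fz.
  have -> : (m.+1 == m.+2) = false by lia.
  rewrite /= -H3.
  by have -> : e0 - s * m.+1%:Z = q by rewrite /e0; ring.
have Hm1 : forall k, x m.+2 k = refl (Y m.+2) s e0 m.+2 k.
  move=> k'; rewrite /x /refl eqxx /Z.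
  by have -> : e0 - s * m.+2%:Z = q - s by rewrite /e0 !intS; ring.
have Hf : forall j, Y m.+2 (j + (e0 + e0)) = - Y m.+2 j.
  apply: anti_of => k'; have := Hu Hm Hm1 0%N isT k'.
  by rewrite /x /refl /= mulr0 subr0.
case: (ltngtP a m.+2) => [lt|gt|->]; last exact: Hf.
  2: by lia.
have Ex : forall k, Y a k = x a k.
  move=> k'; rewrite /x /Fz; have -> : (a == m.+2) = false by lia.
  by have -> : (a == 0%N) = false by lia.
by rewrite !Ex !Hu // ?(ltnW lt) // refl_anti.
Qed.
End FamR.

Section FamD.
Variable G : zmodType.
Definition ysol (p q : int -> G) (n : nat) (b : nat) (k : int) :=
  p (k - (n.+2 - b)%N%:Z) + (if odd (n.+2 - b) then p else q) (k + (n.+2 - b)%N%:Z).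

Lemma ysol_chain p q n : (forall i, p (i - 1) + p (i + 1) = q (i - 1) + q (i + 1)) ->
  chain_rel (ysol p q n) 1 n.+1.
Proof.
move=> Hpq b k Hb; rewrite /ysol.
have E1 : (n.+2 - b.-1)%N = (n.+2 - b).+1 by lia.
have E2 : (n.+2 - b.+1)%N = (n.+2 - b).-1 by lia.
have Hj : (0 < n.+2 - b)%N by lia.
rewrite E1 E2; move: Hj; set j := (n.+2 - b)%N => Hj.
case: j Hj => // j _.
rewrite /= !intS.
have -> : k - 1 - (1 + j%:Z) = k - (1 + (1 + j%:Z)) by ring.
have -> : k + 1 - (1 + j%:Z) = k - j%:Z by ring.
have -> : k - 1 + (1 + j%:Z) = k + j%:Z by ring.
have -> : k + 1 + (1 + j%:Z) = k + (1 + (1 + j%:Z)) by ring.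
rewrite [LHS]addrACA [RHS]addrACA; congr (_ + _).
have -> : k + j%:Z = (k + (1 + j%:Z)) - 1 by ring.
have -> : k + (1 + (1 + j%:Z)) = (k + (1 + j%:Z)) + 1 by ring.
by case: (odd j) => /=; [rewrite -Hpq | rewrite Hpq]; rewrite addrC.
Qed.
End FamD.

Section FamD2.
Variable G : zmodType.
Lemma ysol_anti (p q p' q' : int -> G) n N b k :
  (forall i, p (i + N) = - p' i) -> (forall i, q (i + N) = - q' i) ->
  ysol p q n b (k + N) = - ysol p' q' n b k.
Proof.
move=> Hp Hq; rewrite /ysol [RHS]opprD.
have -> : k + N - (n.+2 - b)%N%:Z = k - (n.+2 - b)%N%:Z + N by ring.
have -> : k + N + (n.+2 - b)%N%:Z = k + (n.+2 - b)%N%:Z + N by ring.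
by rewrite Hp; case: odd; rewrite ?Hp ?Hq.
Qed.

Variable T : nat -> int -> G.
Variable n : nat.
Hypothesis H1 : forall a k, (1 <= a <= n)%N ->
  T a (k - 1) + T a (k + 1) = Fz T a.-1 k + T a.+1 k.
Hypothesis H2 : forall k, T n.+1 (k - 1) + T n.+1 (k + 1) = Fz T n k + (T n.+2 k + T n.+3 k).
Hypothesis H3 : forall k, T n.+2 (k - 1) + T n.+2 (k + 1) = T n.+1 k.
Hypothesis H4 : forall k, T n.+3 (k - 1) + T n.+3 (k + 1) = T n.+1 k.

Lemma famD a k : (1 <= a <= n.+3)%N ->
  T a (k + (n.+2%:Z + n.+2%:Z)) = - T (omega (TD n.+3) a) k.
Proof.
move=> Ha.
pose x b := if b == n.+2 then (fun k => T n.+2 k + T n.+3 k) else Fz T b.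
have Hc : chain_rel x 1 n.+1.
  move=> b k' Hb; rewrite /x.
  have -> : (b == n.+2) = false by lia.
  have -> : (b.-1 == n.+2) = false by lia.
  case: (ltngtP b n.+1) => [lt|gt|Eb]; last 1 first.
    by rewrite Eb eqxx H2 /Fz /=.
    2: by lia.
  have -> : (b.+1 == n.+2) = false by lia.
  have -> : Fz T b = T b by rewrite /Fz; case: eqP => // E; lia.
  apply: H1; lia.
have key : forall p q, (p = T n.+2 /\ q = T n.+3) \/ (p = T n.+3 /\ q = T n.+2) ->
    (forall b, (b <= n.+2)%N -> forall k, x b k = ysol p q n b k) /\
    (forall i, (if odd n then p else q) (i + (n.+2%:Z + n.+2%:Z)) = - p i).
  move=> p q Hpq.
  have Hpq' : forall i, p (i - 1) + p (i + 1) = q (i - 1) + q (i + 1).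
    by move=> i; case: Hpq => [[Ep Eq]|[Ep Eq]]; rewrite Ep ?Eq; rewrite H3 H4.
  have Hu := chain_uniq Hc (@ysol_chain _ p q n Hpq').
  have Hm : forall k, x n.+1 k = ysol p q n n.+1 k.
    move=> k'; rewrite /x /ysol subSn // subnn /=.
    have -> : (n.+1 == n.+2) = false by lia.
    rewrite /Fz /=.
    by case: Hpq => [[Ep Eq]|[Ep Eq]]; rewrite Ep ?Eq ?H3 ?H4.
  have Hm1 : forall k, x n.+2 k = ysol p q n n.+2 k.
    move=> k'; rewrite /x /ysol subnn /= eqxx.
    have -> : k' - 0%N%:Z = k' by ring.
    by case: Hpq => [[Ep Eq]|[Ep Eq]]; rewrite Ep ?Eq //; rewrite addrC.
  split; first exact: Hu.
  move=> i; have := Hu Hm Hm1 0%N isT (i + n.+2%:Z).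
  rewrite /x /ysol /= subn0 addrK -addrA => /eqP.
  by rewrite /Fz /= eq_sym [p i + _]addrC addr_eq0 negbK => /eqP.
have [Ka Kb] := key _ _ (or_introl (conj erefl erefl)).
have [Kc Kd] := key _ _ (or_intror (conj erefl erefl)).
have Ex : forall b k, (1 <= b <= n.+1)%N -> T b k = x b k.
  move=> b k' Hb; rewrite /x /Fz.
  have -> : (b == n.+2) = false by lia.
  by have -> : (b == 0%N) = false by lia.
rewrite /omega; have -> : odd n.+3 = ~~ odd n by rewrite /= !negbK.
case: (boolP (odd n)) Kb Kd => On /= Kb Kd.
  (* r even: omega = id *)
  case: (ltngtP a n.+2) => [lt|gt|->].
  - by rewrite !Ex ?Ka //; try lia; apply: ysol_anti.
  - have -> : a = n.+3 by lia.
    exact: Kd.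
  - exact: Kb.
case: (ltngtP a n.+2) => [lt|gt|->].
- have -> : (a == n.+3) = false by lia.
  rewrite !Ex; try lia.
  rewrite Ka; last lia.
  rewrite Kc; last lia.
  by apply: ysol_anti => i; [exact: Kd | exact: Kb].
- have -> : a = n.+3 by lia.
  rewrite ?eqxx.
  exact: Kb.
- by rewrite ?eqxx; exact: Kd.
Qed.
End FamD2.


Definition lc := seq (nat * int * int).

Section Ev.
Variable G : zmodType.
Variable F : nat -> int -> G.
Variable k : int.

Definition ev (L : lc) : G := \sum_(x <- L) F x.1.1 (k + x.1.2) *~ x.2.
Definition ev' (L : seq (nat * int)) : G := \sum_(x <- L) F x.1 (k + x.2).

Definition coefsum (key : nat * int) (L : lc) : int :=
  foldr (fun y acc => if y.1 == key then y.2 + acc else acc) 0 L.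

Lemma ev_key key L : ev L = F key.1 (k + key.2) *~ coefsum key L +
   ev (filter (fun y => y.1 != key) L).
Proof.
elim: L => [|y L IH]; first by rewrite /ev !big_nil mulr0z addr0.
rewrite /ev /= !big_cons -/(ev L) IH; case: (y.1 =P key) => [E|_] /=.
  by rewrite -E mulrzDr addrA.
by rewrite big_cons -/(ev _) addrCA.
Qed.

Fixpoint zc (fuel : nat) (L : lc) : bool :=
  match fuel with
  | 0%N => nilp L
  | f.+1 => match L with
            | [::] => true
            | y :: _ => (coefsum y.1 L == 0) && zc f (filter (fun z => z.1 != y.1) L)
            end
  end.

Lemma zc_ok fuel L : zc fuel L -> ev L = 0.
Proof.
elim: fuel L => [|f IH] [|y L] //; try by rewrite /ev big_nil.
move=> /andP [/eqP H0 /IH H1].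
by rewrite (ev_key y.1) H0 mulr0z add0r.
Qed.

Definition relterms (co : int) (R : seq (nat * int) * seq (nat * int)) : lc :=
  [seq (x.1, x.2, co) | x <- R.1] ++ [seq (x.1, x.2, - co) | x <- R.2].

Lemma sum_mulrz (L : seq (nat * int)) (f : nat * int -> G) c :
  (\sum_(x <- L) f x) *~ c = \sum_(x <- L) f x *~ c.
Proof.
elim: L => [|y L IH]; first by rewrite !big_nil mul0rz.
by rewrite !big_cons mulrzDl_tmp IH.
Qed.

Lemma ev_relterms co R : ev (relterms co R) = (ev' R.1 - ev' R.2) *~ co.
Proof.
rewrite /ev /relterms big_cat !big_map /ev' mulrzBl !sum_mulrz; congr (_ + _).
by rewrite -sumrN; apply: eq_bigr => x _; rewrite mulrNz.
Qed.

Lemma ev_cat L1 L2 : ev (L1 ++ L2) = ev L1 + ev L2.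
Proof. by rewrite /ev big_cat. Qed.

Lemma ev_neg L : ev [seq (x.1, - x.2) | x <- L] = - ev L.
Proof. by rewrite /ev big_map -sumrN; apply: eq_bigr => x _; rewrite mulrNz. Qed.
End Ev.

Definition relE (d : Dynkin) (b : nat) (c : int) : seq (nat * int) * seq (nat * int) :=
  ([:: (b, c - 1); (b, c + 1)], [seq (b', c) | b' <- iota 1 (rank d) & adj d b b']).

Definition relF4T (b : nat) (c : int) : seq (nat * int) * seq (nat * int) :=
  match b with
  | 1%N => ([:: (1%N, c - 2); (1%N, c + 2)], [:: (2%N, c)])
  | 2%N => ([:: (2%N, c - 2); (2%N, c + 2)], [:: (1%N, c); (3%N, c)])
  | 3%N => ([:: (3%N, c - 1); (3%N, c + 1)], [:: (2%N, c - 1); (2%N, c + 1); (4%N, c)])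
  | _ => ([:: (4%N, c - 1); (4%N, c + 1)], [:: (3%N, c)])
  end.

Definition relF4Y (b : nat) (c : int) : seq (nat * int) * seq (nat * int) :=
  match b with
  | 1%N => ([:: (1%N, c - 2); (1%N, c + 2)], [:: (2%N, c)])
  | 2%N => ([:: (2%N, c - 2); (2%N, c + 2)], [:: (1%N, c); (3%N, c - 1); (3%N, c + 1)])
  | 3%N => ([:: (3%N, c - 1); (3%N, c + 1)], [:: (2%N, c); (4%N, c)])
  | _ => ([:: (4%N, c - 1); (4%N, c + 1)], [:: (3%N, c)])
  end.

Definition relG2T (b : nat) (c : int) : seq (nat * int) * seq (nat * int) :=
  match b with
  | 1%N => ([:: (1%N, c - 3); (1%N, c + 3)], [:: (2%N, c)])
  | _ => ([:: (2%N, c - 1); (2%N, c + 1)], [:: (1%N, c - 2); (1%N, c); (1%N, c + 2)])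
  end.

Definition relG2Y (b : nat) (c : int) : seq (nat * int) * seq (nat * int) :=
  match b with
  | 1%N => ([:: (1%N, c - 3); (1%N, c + 3)], [:: (2%N, c - 2); (2%N, c); (2%N, c + 2)])
  | _ => ([:: (2%N, c - 1); (2%N, c + 1)], [:: (1%N, c)])
  end.

Definition target (d : Dynkin) (a : nat) : lc :=
  [:: (a, (tnum d * hdual d)%N%:Z, 1); (omega d a, 0, 1)].

Definition combo (rel : nat -> int -> seq (nat * int) * seq (nat * int))
  (C : seq (nat * int * int)) : lc :=
  flatten [seq relterms x.2 (rel x.1.1 x.1.2) | x <- C].

Definition check (d : Dynkin) rel (a : nat) (C : seq (nat * int * int)) : bool :=
  let L := target d a ++ [seq (x.1, - x.2) | x <- combo rel C] in
  all (fun x => 1 <= x.1.1 <= rank d)%N C && zc (size L) L.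

Section Check.
Variable G : zmodType.
Variable F : nat -> int -> G.
Variable d : Dynkin.
Variable rel : nat -> int -> seq (nat * int) * seq (nat * int).
Hypothesis Hrel : forall b c k, (1 <= b <= rank d)%N ->
  ev' F k (rel b c).1 = ev' F k (rel b c).2.

Lemma check_ok a C k : check d rel a C ->
  F a (k + (tnum d * hdual d)%N%:Z) = - F (omega d a) k.
Proof.
case/andP => HC /zc_ok H; have {H} := H _ F k.
rewrite ev_cat ev_neg.
have -> : ev F k (combo rel C) = 0.
  elim: C HC => [|x C IH] /=; first by rewrite /combo /ev big_nil.
  case/andP => Hx /IH; rewrite /combo /= ev_cat => ->.
  by rewrite ev_relterms Hrel // subrr mul0rz addr0.
rewrite subr0 /target /ev !big_cons big_nil !mulr1z addr0 addr0 => /eqP.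
by rewrite addr_eq0 => /eqP.
Qed.
End Check.

Section SL.
Variable G : zmodType.
Variable F : nat -> int -> G.
Variable d : Dynkin.
Hypothesis H : forall b k, (1 <= b <= rank d)%N ->
  F b (k - 1) + F b (k + 1) = \sum_(b' <- iota 1 (rank d) | adj d b b') F b' k.
Lemma relE_ok b c k : (1 <= b <= rank d)%N ->
  ev' F k (relE d b c).1 = ev' F k (relE d b c).2.
Proof.
move=> Hb; rewrite /ev' /= !big_cons big_nil addr0 !addrA H //.
by rewrite big_map big_filter.
Qed.
End SL.
Definition cert_E6_T : seq (seq (nat * int * int)) :=
  [:: [:: (1%N, (Posz 11), (Posz 1)); (2%N, (Posz 10), (Posz 1)); (3%N, (Posz 9), (Posz 1)); (4%N, (Posz 8), (Posz 1)); (5%N, (Posz 8), (Posz 1)); (3%N, (Posz 7), (Posz 1)); (6%N, (Posz 7), (Posz 1)); (2%N, (Posz 6), (Posz 1)); (5%N, (Posz 6), (Posz 1)); (1%N, (Posz 5), (Posz 1)); (3%N, (Posz 5), (Posz 1)); (2%N, (Posz 4), (Posz 1)); (4%N, (Posz 4), (Posz 1)); (3%N, (Posz 3), (Posz 1)); (5%N, (Posz 2), (Posz 1)); (6%N, (Posz 1), (Posz 1))];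
  [:: (2%N, (Posz 11), (Posz 1)); (1%N, (Posz 10), (Posz 1)); (3%N, (Posz 10), (Posz 1)); (2%N, (Posz 9), (Posz 1)); (4%N, (Posz 9), (Posz 1)); (5%N, (Posz 9), (Posz 1)); (3%N, (Posz 8), (Posz 2)); (6%N, (Posz 8), (Posz 1)); (2%N, (Posz 7), (Posz 1)); (4%N, (Posz 7), (Posz 1)); (5%N, (Posz 7), (Posz 2)); (6%N, (Posz 6), (Posz 1)); (1%N, (Posz 6), (Posz 1)); (3%N, (Posz 6), (Posz 2)); (4%N, (Posz 5), (Posz 1)); (5%N, (Posz 5), (Posz 1)); (2%N, (Posz 5), (Posz 2)); (1%N, (Posz 4), (Posz 1)); (3%N, (Posz 4), (Posz 2)); (4%N, (Posz 3), (Posz 1)); (5%N, (Posz 3), (Posz 1)); (2%N, (Posz 3), (Posz 1)); (6%N, (Posz 2), (Posz 1)); (3%N, (Posz 2), (Posz 1)); (5%N, (Posz 1), (Posz 1))];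
  [:: (3%N, (Posz 11), (Posz 1)); (2%N, (Posz 10), (Posz 1)); (4%N, (Posz 10), (Posz 1)); (5%N, (Posz 10), (Posz 1)); (1%N, (Posz 9), (Posz 1)); (3%N, (Posz 9), (Posz 2)); (6%N, (Posz 9), (Posz 1)); (4%N, (Posz 8), (Posz 1)); (5%N, (Posz 8), (Posz 2)); (2%N, (Posz 8), (Posz 2)); (1%N, (Posz 7), (Posz 1)); (3%N, (Posz 7), (Posz 3)); (6%N, (Posz 7), (Posz 1)); (4%N, (Posz 6), (Posz 2)); (5%N, (Posz 6), (Posz 2)); (2%N, (Posz 6), (Posz 2)); (1%N, (Posz 5), (Posz 1)); (3%N, (Posz 5), (Posz 3)); (6%N, (Posz 5), (Posz 1)); (4%N, (Posz 4), (Posz 1)); (5%N, (Posz 4), (Posz 2)); (2%N, (Posz 4), (Posz 2)); (1%N, (Posz 3), (Posz 1)); (6%N, (Posz 3), (Posz 1)); (3%N, (Posz 3), (Posz 2)); (4%N, (Posz 2), (Posz 1)); (5%N, (Posz 2), (Posz 1)); (2%N, (Posz 2), (Posz 1)); (3%N, (Posz 1), (Posz 1))];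
  [:: (4%N, (Posz 11), (Posz 1)); (3%N, (Posz 10), (Posz 1)); (2%N, (Posz 9), (Posz 1)); (5%N, (Posz 9), (Posz 1)); (1%N, (Posz 8), (Posz 1)); (3%N, (Posz 8), (Posz 1)); (6%N, (Posz 8), (Posz 1)); (2%N, (Posz 7), (Posz 1)); (4%N, (Posz 7), (Posz 1)); (5%N, (Posz 7), (Posz 1)); (3%N, (Posz 6), (Posz 2)); (2%N, (Posz 5), (Posz 1)); (4%N, (Posz 5), (Posz 1)); (5%N, (Posz 5), (Posz 1)); (1%N, (Posz 4), (Posz 1)); (3%N, (Posz 4), (Posz 1)); (6%N, (Posz 4), (Posz 1)); (2%N, (Posz 3), (Posz 1)); (5%N, (Posz 3), (Posz 1)); (3%N, (Posz 2), (Posz 1)); (4%N, (Posz 1), (Posz 1))];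
  [:: (5%N, (Posz 11), (Posz 1)); (3%N, (Posz 10), (Posz 1)); (6%N, (Posz 10), (Posz 1)); (2%N, (Posz 9), (Posz 1)); (4%N, (Posz 9), (Posz 1)); (5%N, (Posz 9), (Posz 1)); (1%N, (Posz 8), (Posz 1)); (3%N, (Posz 8), (Posz 2)); (4%N, (Posz 7), (Posz 1)); (5%N, (Posz 7), (Posz 1)); (2%N, (Posz 7), (Posz 2)); (1%N, (Posz 6), (Posz 1)); (6%N, (Posz 6), (Posz 1)); (3%N, (Posz 6), (Posz 2)); (4%N, (Posz 5), (Posz 1)); (2%N, (Posz 5), (Posz 1)); (5%N, (Posz 5), (Posz 2)); (6%N, (Posz 4), (Posz 1)); (3%N, (Posz 4), (Posz 2)); (4%N, (Posz 3), (Posz 1)); (2%N, (Posz 3), (Posz 1)); (5%N, (Posz 3), (Posz 1)); (1%N, (Posz 2), (Posz 1)); (3%N, (Posz 2), (Posz 1)); (2%N, (Posz 1), (Posz 1))];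
  [:: (6%N, (Posz 11), (Posz 1)); (5%N, (Posz 10), (Posz 1)); (3%N, (Posz 9), (Posz 1)); (2%N, (Posz 8), (Posz 1)); (4%N, (Posz 8), (Posz 1)); (1%N, (Posz 7), (Posz 1)); (3%N, (Posz 7), (Posz 1)); (2%N, (Posz 6), (Posz 1)); (5%N, (Posz 6), (Posz 1)); (3%N, (Posz 5), (Posz 1)); (6%N, (Posz 5), (Posz 1)); (4%N, (Posz 4), (Posz 1)); (5%N, (Posz 4), (Posz 1)); (3%N, (Posz 3), (Posz 1)); (2%N, (Posz 2), (Posz 1)); (1%N, (Posz 1), (Posz 1))]].

Definition cert_E7_T : seq (seq (nat * int * int)) :=
  [:: [:: (1%N, (Posz 17), (Posz 1)); (2%N, (Posz 16), (Posz 1)); (3%N, (Posz 15), (Posz 1)); (4%N, (Posz 14), (Posz 1)); (7%N, (Posz 14), (Posz 1)); (5%N, (Posz 13), (Posz 1)); (3%N, (Posz 13), (Posz 1)); (6%N, (Posz 12), (Posz 1)); (2%N, (Posz 12), (Posz 1)); (4%N, (Posz 12), (Posz 1)); (1%N, (Posz 11), (Posz 1)); (3%N, (Posz 11), (Posz 1)); (5%N, (Posz 11), (Posz 1)); (2%N, (Posz 10), (Posz 1)); (7%N, (Posz 10), (Posz 1)); (4%N, (Posz 10), (Posz 1)); (3%N, (Posz 9), (Posz 2)); (2%N, (Posz 8), (Posz 1)); (7%N, (Posz 8), (Posz 1)); (4%N, (Posz 8), (Posz 1)); (1%N, (Posz 7), (Posz 1)); (3%N, (Posz 7), (Posz 1));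 (5%N, (Posz 7), (Posz 1)); (2%N, (Posz 6), (Posz 1)); (4%N, (Posz 6), (Posz 1)); (6%N, (Posz 6), (Posz 1)); (3%N, (Posz 5), (Posz 1)); (5%N, (Posz 5), (Posz 1)); (7%N, (Posz 4), (Posz 1)); (4%N, (Posz 4), (Posz 1)); (3%N, (Posz 3), (Posz 1)); (2%N, (Posz 2), (Posz 1)); (1%N, (Posz 1), (Posz 1))];
  [:: (2%N, (Posz 17), (Posz 1)); (1%N, (Posz 16), (Posz 1)); (3%N, (Posz 16), (Posz 1)); (2%N, (Posz 15), (Posz 1)); (4%N, (Posz 15), (Posz 1)); (7%N, (Posz 15), (Posz 1)); (3%N, (Posz 14), (Posz 2)); (5%N, (Posz 14), (Posz 1)); (2%N, (Posz 13), (Posz 1)); (4%N, (Posz 13), (Posz 2)); (7%N, (Posz 13), (Posz 1)); (6%N, (Posz 13), (Posz 1)); (3%N, (Posz 12), (Posz 2)); (5%N, (Posz 12), (Posz 2)); (1%N, (Posz 12), (Posz 1)); (2%N, (Posz 11), (Posz 2)); (7%N, (Posz 11), (Posz 1)); (6%N, (Posz 11), (Posz 1)); (4%N, (Posz 11), (Posz 2)); (5%N, (Posz 10), (Posz 1)); (1%N, (Posz 10), (Posz 1)); (3%N, (Posz 10), (Posz 3)); (2%N, (Posz 9), (Posz 2)); (7%N, (Posz 9), (Posz 2)); (4%N, (Posz 9), (Posz 2)); (5%N, (Posz 8), (Posz 1)); (1%N, (Posz 8), (Posz 1)); (3%N, (Posz 8), (Posz 3)); (2%N, (Posz 7), (Posz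 2)); (7%N, (Posz 7), (Posz 1)); (4%N, (Posz 7), (Posz 2)); (6%N, (Posz 7), (Posz 1)); (5%N, (Posz 6), (Posz 2)); (1%N, (Posz 6), (Posz 1)); (3%N, (Posz 6), (Posz 2)); (2%N, (Posz 5), (Posz 1)); (7%N, (Posz 5), (Posz 1)); (6%N, (Posz 5), (Posz 1)); (4%N, (Posz 5), (Posz 2)); (5%N, (Posz 4), (Posz 1)); (3%N, (Posz 4), (Posz 2)); (2%N, (Posz 3), (Posz 1)); (7%N, (Posz 3), (Posz 1)); (4%N, (Posz 3), (Posz 1)); (1%N, (Posz 2), (Posz 1)); (3%N, (Posz 2), (Posz 1)); (2%N, (Posz 1), (Posz 1))];
  [:: (3%N, (Posz 17), (Posz 1)); (2%N, (Posz 16), (Posz 1)); (4%N, (Posz 16), (Posz 1)); (7%N, (Posz 16), (Posz 1)); (1%N, (Posz 15), (Posz 1)); (3%N, (Posz 15), (Posz 2)); (5%N, (Posz 15), (Posz 1)); (4%N, (Posz 14), (Posz 2)); (7%N, (Posz 14), (Posz 1)); (2%N, (Posz 14), (Posz 2)); (6%N, (Posz 14), (Posz 1)); (1%N, (Posz 13), (Posz 1)); (5%N, (Posz 13), (Posz 2)); (3%N, (Posz 13), (Posz 3)); (7%N, (Posz 12), (Posz 2)); (2%N, (Posz 12), (Posz 2)); (6%N, (Posz 12), (Posz 1)); (4%N, (Posz 12), (Posz 3)); (1%N, (Posz 11), (Posz 1)); (5%N, (Posz 11), (Posz 2)); (3%N, (Posz 11), (Posz 4)); (7%N, (Posz 10),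 (Posz 2)); (2%N, (Posz 10), (Posz 3)); (6%N, (Posz 10), (Posz 1)); (4%N, (Posz 10), (Posz 3)); (1%N, (Posz 9), (Posz 2)); (5%N, (Posz 9), (Posz 2)); (3%N, (Posz 9), (Posz 4)); (7%N, (Posz 8), (Posz 2)); (2%N, (Posz 8), (Posz 3)); (6%N, (Posz 8), (Posz 1)); (4%N, (Posz 8), (Posz 3)); (1%N, (Posz 7), (Posz 1)); (5%N, (Posz 7), (Posz 2)); (3%N, (Posz 7), (Posz 4)); (7%N, (Posz 6), (Posz 2)); (2%N, (Posz 6), (Posz 2)); (6%N, (Posz 6), (Posz 1)); (4%N, (Posz 6), (Posz 3)); (1%N, (Posz 5), (Posz 1)); (5%N, (Posz 5), (Posz 2)); (3%N, (Posz 5), (Posz 3)); (7%N, (Posz 4), (Posz 1)); (2%N, (Posz 4), (Posz 2)); (6%N, (Posz 4), (Posz 1)); (4%N, (Posz 4), (Posz 2)); (1%N, (Posz 3), (Posz 1)); (5%N, (Posz 3), (Posz 1)); (3%N, (Posz 3), (Posz 2)); (7%N, (Posz 2), (Posz 1)); (2%N, (Posz 2), (Posz 1)); (4%N, (Posz 2), (Posz 1)); (3%N, (Posz 1), (Posz 1))];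
  [:: (4%N, (Posz 17), (Posz 1)); (3%N, (Posz 16), (Posz 1)); (5%N, (Posz 16), (Posz 1)); (2%N, (Posz 15), (Posz 1)); (7%N, (Posz 15), (Posz 1)); (4%N, (Posz 15), (Posz 1)); (6%N, (Posz 15), (Posz 1)); (1%N, (Posz 14), (Posz 1)); (3%N, (Posz 14), (Posz 2)); (5%N, (Posz 14), (Posz 1)); (7%N, (Posz 13), (Posz 1)); (4%N, (Posz 13), (Posz 2)); (2%N, (Posz 13), (Posz 2)); (1%N, (Posz 12), (Posz 1)); (3%N, (Posz 12), (Posz 3)); (5%N, (Posz 12), (Posz 1)); (7%N, (Posz 11), (Posz 2)); (4%N, (Posz 11), (Posz 2)); (2%N, (Posz 11), (Posz 2)); (6%N, (Posz 11), (Posz 1)); (1%N, (Posz 10), (Posz 1)); (3%N, (Posz 10), (Posz 3)); (5%N, (Posz 10), (Posz 2)); (7%N, (Posz 9), (Posz 1)); (4%N, (Posz 9), (Posz 3)); (2%N, (Posz 9), (Posz 2)); (6%N, (Posz 9), (Posz 1)); (1%N, (Posz 8), (Posz 1)); (3%N, (Posz 8), (Posz 3)); (5%N, (Posz 8), (Posz 2)); (7%N, (Posz 7), (Posz 2)); (2%N, (Posz 7), (Posz 2)); (6%N, (Posz 7), (Posz 1)); (4%N, (Posz 7), (Posz 2)); (1%N, (Posz 6), (Posz 1)); (3%N, (Posz 6), (Posz 3)); (5%N, (Posz 6), (Posz 1)); (7%N, (Posz 5), (Posz 1)); (2%N, (Posz 5), (Posz 2)); (4%N, (Posz 5), (Posz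 2)); (1%N, (Posz 4), (Posz 1)); (5%N, (Posz 4), (Posz 1)); (3%N, (Posz 4), (Posz 2)); (7%N, (Posz 3), (Posz 1)); (2%N, (Posz 3), (Posz 1)); (4%N, (Posz 3), (Posz 1)); (6%N, (Posz 3), (Posz 1)); (3%N, (Posz 2), (Posz 1)); (5%N, (Posz 2), (Posz 1)); (4%N, (Posz 1), (Posz 1))];
  [:: (5%N, (Posz 17), (Posz 1)); (4%N, (Posz 16), (Posz 1)); (6%N, (Posz 16), (Posz 1)); (3%N, (Posz 15), (Posz 1)); (5%N, (Posz 15), (Posz 1)); (2%N, (Posz 14), (Posz 1)); (7%N, (Posz 14), (Posz 1)); (4%N, (Posz 14), (Posz 1)); (1%N, (Posz 13), (Posz 1)); (3%N, (Posz 13), (Posz 2)); (7%N, (Posz 12), (Posz 1)); (4%N, (Posz 12), (Posz 1)); (2%N, (Posz 12), (Posz 2)); (1%N, (Posz 11), (Posz 1)); (5%N, (Posz 11), (Posz 1)); (3%N, (Posz 11), (Posz 2)); (7%N, (Posz 10), (Posz 1)); (2%N, (Posz 10), (Posz 1)); (6%N, (Posz 10), (Posz 1)); (4%N, (Posz 10), (Posz 2)); (3%N, (Posz 9), (Posz 2)); (5%N, (Posz 9), (Posz 2)); (7%N, (Posz 8), (Posz 1)); (2%N, (Posz 8), (Posz 1)); (6%N, (Posz 8), (Posz 1)); (4%N, (Posz 8), (Posz 2)); (5%N, (Posz 7), (Posz 1)); (1%N, (Posz 7), (Posz 1)); (3%N, (Posz 7), (Posz 2)); (7%N, (Posz 6),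 (Posz 1)); (4%N, (Posz 6), (Posz 1)); (2%N, (Posz 6), (Posz 2)); (1%N, (Posz 5), (Posz 1)); (3%N, (Posz 5), (Posz 2)); (7%N, (Posz 4), (Posz 1)); (4%N, (Posz 4), (Posz 1)); (2%N, (Posz 4), (Posz 1)); (5%N, (Posz 3), (Posz 1)); (3%N, (Posz 3), (Posz 1)); (6%N, (Posz 2), (Posz 1)); (4%N, (Posz 2), (Posz 1)); (5%N, (Posz 1), (Posz 1))];
  [:: (6%N, (Posz 17), (Posz 1)); (5%N, (Posz 16), (Posz 1)); (4%N, (Posz 15), (Posz 1)); (3%N, (Posz 14), (Posz 1)); (2%N, (Posz 13), (Posz 1)); (7%N, (Posz 13), (Posz 1)); (1%N, (Posz 12), (Posz 1)); (3%N, (Posz 12), (Posz 1)); (2%N, (Posz 11), (Posz 1)); (4%N, (Posz 11), (Posz 1)); (3%N, (Posz 10), (Posz 1)); (5%N, (Posz 10), (Posz 1)); (7%N, (Posz 9), (Posz 1)); (4%N, (Posz 9), (Posz 1)); (6%N, (Posz 9), (Posz 1)); (3%N, (Posz 8), (Posz 1)); (5%N, (Posz 8), (Posz 1)); (2%N, (Posz 7), (Posz 1)); (4%N, (Posz 7), (Posz 1)); (1%N, (Posz 6), (Posz 1)); (3%N, (Posz 6), (Posz 1)); (2%N, (Posz 5), (Posz 1)); (7%N, (Posz 5), (Posz 1)); (3%N, (Posz 4), (Posz 1)); (4%N, (Posz 3), (Posz 1)); (5%N, (Posz 2), (Posz 1)); (6%N, (Posz 1), (Posz 1))];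
  [:: (7%N, (Posz 17), (Posz 1)); (3%N, (Posz 16), (Posz 1)); (2%N, (Posz 15), (Posz 1)); (4%N, (Posz 15), (Posz 1)); (1%N, (Posz 14), (Posz 1)); (3%N, (Posz 14), (Posz 1)); (5%N, (Posz 14), (Posz 1)); (2%N, (Posz 13), (Posz 1)); (7%N, (Posz 13), (Posz 1)); (4%N, (Posz 13), (Posz 1)); (6%N, (Posz 13), (Posz 1)); (3%N, (Posz 12), (Posz 2)); (5%N, (Posz 12), (Posz 1)); (2%N, (Posz 11), (Posz 1)); (7%N, (Posz 11), (Posz 1)); (4%N, (Posz 11), (Posz 2)); (5%N, (Posz 10), (Posz 1)); (1%N, (Posz 10), (Posz 1)); (3%N, (Posz 10), (Posz 2)); (7%N, (Posz 9), (Posz 1)); (4%N, (Posz 9), (Posz 1)); (6%N, (Posz 9), (Posz 1)); (2%N, (Posz 9), (Posz 2)); (1%N, (Posz 8), (Posz 1)); (5%N, (Posz 8), (Posz 1)); (3%N, (Posz 8), (Posz 2)); (7%N, (Posz 7), (Posz 1)); (2%N, (Posz 7), (Posz 1)); (4%N, (Posz 7), (Posz 2)); (5%N, (Posz 6), (Posz 1)); (3%N, (Posz 6), (Posz 2)); (7%N, (Posz 5), (Posz 1)); (2%N, (Posz 5), (Posz 1)); (4%N, (Posz 5), (Posz 1)); (6%N, (Posz 5), (Posz 1)); (1%N, (Posz 4), (Posz 1)); (3%N, (Posz 4), (Posz 1)); (5%N, (Posz 4), (Posz 1)); (2%N, (Posz 3), (Posz 1)); (4%N, (Posz 3), (Posz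 1)); (3%N, (Posz 2), (Posz 1)); (7%N, (Posz 1), (Posz 1))]].

Definition cert_E8_T : seq (seq (nat * int * int)) :=
  [:: [:: (1%N, (Posz 29), (Posz 1)); (2%N, (Posz 28), (Posz 1)); (3%N, (Posz 27), (Posz 1)); (4%N, (Posz 26), (Posz 1)); (5%N, (Posz 25), (Posz 1)); (6%N, (Posz 24), (Posz 1)); (8%N, (Posz 24), (Posz 1)); (7%N, (Posz 23), (Posz 1)); (5%N, (Posz 23), (Posz 1)); (4%N, (Posz 22), (Posz 1)); (6%N, (Posz 22), (Posz 1)); (3%N, (Posz 21), (Posz 1)); (5%N, (Posz 21), (Posz 1)); (2%N, (Posz 20), (Posz 1)); (4%N, (Posz 20), (Posz 1)); (8%N, (Posz 20), (Posz 1)); (1%N, (Posz 19), (Posz 1)); (3%N, (Posz 19), (Posz 1)); (5%N, (Posz 19), (Posz 1)); (2%N, (Posz 18), (Posz 1)); (4%N, (Posz 18), (Posz 1)); (6%N, (Posz 18), (Posz 1)); (3%N, (Posz 17), (Posz 1)); (5%N, (Posz 17), (Posz 1)); (7%N, (Posz 17), (Posz 1)); (4%N, (Posz 16), (Posz 1)); (8%N, (Posz 16), (Posz 1)); (6%N, (Posz 16), (Posz 1)); (5%N, (Posz 15), (Posz 2)); (4%N, (Posz 14), (Posz 1)); (8%N, (Posz 14), (Posz 1)); (6%N, (Posz 14), (Posz 1)); (3%N, (Posz 13), (Posz 1)); (5%N, (Posz 13), (Posz 1)); (7%N, (Posz 13), (Posz 1)); (2%N, (Posz 12), (Posz 1));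 (4%N, (Posz 12), (Posz 1)); (6%N, (Posz 12), (Posz 1)); (1%N, (Posz 11), (Posz 1)); (3%N, (Posz 11), (Posz 1)); (5%N, (Posz 11), (Posz 1)); (2%N, (Posz 10), (Posz 1)); (4%N, (Posz 10), (Posz 1)); (8%N, (Posz 10), (Posz 1)); (3%N, (Posz 9), (Posz 1)); (5%N, (Posz 9), (Posz 1)); (4%N, (Posz 8), (Posz 1)); (6%N, (Posz 8), (Posz 1)); (5%N, (Posz 7), (Posz 1)); (7%N, (Posz 7), (Posz 1)); (8%N, (Posz 6), (Posz 1)); (6%N, (Posz 6), (Posz 1)); (5%N, (Posz 5), (Posz 1)); (4%N, (Posz 4), (Posz 1)); (3%N, (Posz 3), (Posz 1)); (2%N, (Posz 2), (Posz 1)); (1%N, (Posz 1), (Posz 1))];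
  [:: (2%N, (Posz 29), (Posz 1)); (1%N, (Posz 28), (Posz 1)); (3%N, (Posz 28), (Posz 1)); (2%N, (Posz 27), (Posz 1)); (4%N, (Posz 27), (Posz 1)); (3%N, (Posz 26), (Posz 1)); (5%N, (Posz 26), (Posz 1)); (4%N, (Posz 25), (Posz 1)); (6%N, (Posz 25), (Posz 1)); (8%N, (Posz 25), (Posz 1)); (5%N, (Posz 24), (Posz 2)); (7%N, (Posz 24), (Posz 1)); (4%N, (Posz 23), (Posz 1)); (6%N, (Posz 23), (Posz 2)); (8%N, (Posz 23), (Posz 1)); (5%N, (Posz 22), (Posz 2)); (7%N, (Posz 22), (Posz 1)); (3%N, (Posz 22), (Posz 1)); (4%N, (Posz 21), (Posz 2)); (8%N, (Posz 21), (Posz 1)); (6%N, (Posz 21), (Posz 1)); (2%N, (Posz 21), (Posz 1)); (3%N, (Posz 20), (Posz 2)); (5%N, (Posz 20), (Posz 2)); (1%N, (Posz 20), (Posz 1)); (8%N, (Posz 19), (Posz 1)); (6%N, (Posz 19), (Posz 1)); (2%N, (Posz 19), (Posz 2)); (4%N, (Posz 19), (Posz 2)); (1%N, (Posz 18), (Posz 1)); (7%N, (Posz 18), (Posz 1)); (3%N, (Posz 18), (Posz 2)); (5%N, (Posz 18), (Posz 2)); (8%N, (Posz 17), (Posz 1)); (2%N, (Posz 17), (Posz 1)); (4%N, (Posz 17), (Posz 2)); (6%N, (Posz 17), (Posz 2)); (7%N, (Posz 16), (Posz 1)); (3%N, (Posz 16), (Posz 1)); (5%N, (Posz 16), (Posz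 3)); (8%N, (Posz 15), (Posz 2)); (4%N, (Posz 15), (Posz 2)); (6%N, (Posz 15), (Posz 2)); (7%N, (Posz 14), (Posz 1)); (3%N, (Posz 14), (Posz 1)); (5%N, (Posz 14), (Posz 3)); (8%N, (Posz 13), (Posz 1)); (4%N, (Posz 13), (Posz 2)); (6%N, (Posz 13), (Posz 2)); (2%N, (Posz 13), (Posz 1)); (7%N, (Posz 12), (Posz 1)); (3%N, (Posz 12), (Posz 2)); (5%N, (Posz 12), (Posz 2)); (1%N, (Posz 12), (Posz 1)); (8%N, (Posz 11), (Posz 1)); (6%N, (Posz 11), (Posz 1)); (2%N, (Posz 11), (Posz 2)); (4%N, (Posz 11), (Posz 2)); (1%N, (Posz 10), (Posz 1)); (3%N, (Posz 10), (Posz 2)); (5%N, (Posz 10), (Posz 2)); (8%N, (Posz 9), (Posz 1)); (6%N, (Posz 9), (Posz 1)); (2%N, (Posz 9), (Posz 1)); (4%N, (Posz 9), (Posz 2)); (3%N, (Posz 8), (Posz 1)); (7%N, (Posz 8), (Posz 1)); (5%N, (Posz 8), (Posz 2)); (8%N, (Posz 7), (Posz 1)); (4%N, (Posz 7), (Posz 1)); (6%N, (Posz 7), (Posz 2)); (7%N, (Posz 6), (Posz 1)); (5%N, (Posz 6), (Posz 2)); (8%N, (Posz 5), (Posz 1)); (4%N, (Posz 5), (Posz 1)); (6%N, (Posz 5), (Posz 1)); (3%N, (Posz 4), (Posz 1)); (5%N, (Posz 4), (Posz 1)); (2%N, (Posz 3), (Posz 1)); (4%N, (Posz 3), (Posz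 1)); (1%N, (Posz 2), (Posz 1)); (3%N, (Posz 2), (Posz 1)); (2%N, (Posz 1), (Posz 1))];
  [:: (3%N, (Posz 29), (Posz 1)); (2%N, (Posz 28), (Posz 1)); (4%N, (Posz 28), (Posz 1)); (1%N, (Posz 27), (Posz 1)); (3%N, (Posz 27), (Posz 1)); (5%N, (Posz 27), (Posz 1)); (2%N, (Posz 26), (Posz 1)); (4%N, (Posz 26), (Posz 1)); (6%N, (Posz 26), (Posz 1)); (8%N, (Posz 26), (Posz 1)); (3%N, (Posz 25), (Posz 1)); (5%N, (Posz 25), (Posz 2)); (7%N, (Posz 25), (Posz 1)); (6%N, (Posz 24), (Posz 2)); (8%N, (Posz 24), (Posz 1)); (4%N, (Posz 24), (Posz 2)); (3%N, (Posz 23), (Posz 1)); (7%N, (Posz 23), (Posz 1)); (5%N, (Posz 23), (Posz 3)); (6%N, (Posz 22), (Posz 2)); (8%N, (Posz 22), (Posz 2)); (4%N, (Posz 22), (Posz 2)); (2%N, (Posz 22), (Posz 1)); (3%N, (Posz 21), (Posz 2)); (7%N, (Posz 21), (Posz 1)); (5%N, (Posz 21), (Posz 3)); (1%N, (Posz 21), (Posz 1)); (6%N, (Posz 20), (Posz 2)); (8%N, (Posz 20), (Posz 1)); (2%N, (Posz 20), (Posz 2)); (4%N, (Posz 20), (Posz 3)); (7%N, (Posz 19), (Posz 1)); (1%N, (Posz 19), (Posz 1)); (3%N, (Posz 19), (Posz 3)); (5%N, (Posz 19), (Posz 3)); (6%N, (Posz 18), (Posz 2)); (8%N, (Posz 18),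 (Posz 2)); (2%N, (Posz 18), (Posz 2)); (4%N, (Posz 18), (Posz 3)); (7%N, (Posz 17), (Posz 1)); (1%N, (Posz 17), (Posz 1)); (3%N, (Posz 17), (Posz 2)); (5%N, (Posz 17), (Posz 4)); (6%N, (Posz 16), (Posz 3)); (8%N, (Posz 16), (Posz 2)); (2%N, (Posz 16), (Posz 1)); (4%N, (Posz 16), (Posz 3)); (7%N, (Posz 15), (Posz 2)); (3%N, (Posz 15), (Posz 2)); (5%N, (Posz 15), (Posz 4)); (6%N, (Posz 14), (Posz 3)); (8%N, (Posz 14), (Posz 2)); (2%N, (Posz 14), (Posz 1)); (4%N, (Posz 14), (Posz 3)); (7%N, (Posz 13), (Posz 1)); (3%N, (Posz 13), (Posz 2)); (5%N, (Posz 13), (Posz 4)); (1%N, (Posz 13), (Posz 1)); (6%N, (Posz 12), (Posz 2)); (8%N, (Posz 12), (Posz 2)); (2%N, (Posz 12), (Posz 2)); (4%N, (Posz 12), (Posz 3)); (7%N, (Posz 11), (Posz 1)); (1%N, (Posz 11), (Posz 1)); (3%N, (Posz 11), (Posz 3)); (5%N, (Posz 11), (Posz 3)); (6%N, (Posz 10), (Posz 2)); (8%N, (Posz 10), (Posz 1)); (2%N, (Posz 10), (Posz 2)); (4%N, (Posz 10), (Posz 3)); (7%N, (Posz 9), (Posz 1)); (1%N, (Posz 9), (Posz 1)); (3%N, (Posz 9), (Posz 2)); (5%N, (Posz 9), (Posz 3)); (6%N, (Posz 8), (Posz 2)); (8%N, (Posz 8), (Posz 2)); (2%N, (Posz 8),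 (Posz 1)); (4%N, (Posz 8), (Posz 2)); (7%N, (Posz 7), (Posz 1)); (3%N, (Posz 7), (Posz 1)); (5%N, (Posz 7), (Posz 3)); (6%N, (Posz 6), (Posz 2)); (8%N, (Posz 6), (Posz 1)); (4%N, (Posz 6), (Posz 2)); (7%N, (Posz 5), (Posz 1)); (3%N, (Posz 5), (Posz 1)); (5%N, (Posz 5), (Posz 2)); (6%N, (Posz 4), (Posz 1)); (8%N, (Posz 4), (Posz 1)); (4%N, (Posz 4), (Posz 1)); (2%N, (Posz 4), (Posz 1)); (5%N, (Posz 3), (Posz 1)); (1%N, (Posz 3), (Posz 1)); (3%N, (Posz 3), (Posz 1)); (2%N, (Posz 2), (Posz 1)); (4%N, (Posz 2), (Posz 1)); (3%N, (Posz 1), (Posz 1))];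
  [:: (4%N, (Posz 29), (Posz 1)); (3%N, (Posz 28), (Posz 1)); (5%N, (Posz 28), (Posz 1)); (2%N, (Posz 27), (Posz 1)); (4%N, (Posz 27), (Posz 1)); (6%N, (Posz 27), (Posz 1)); (8%N, (Posz 27), (Posz 1)); (1%N, (Posz 26), (Posz 1)); (3%N, (Posz 26), (Posz 1)); (5%N, (Posz 26), (Posz 2)); (7%N, (Posz 26), (Posz 1)); (6%N, (Posz 25), (Posz 2)); (8%N, (Posz 25), (Posz 1)); (2%N, (Posz 25), (Posz 1)); (4%N, (Posz 25), (Posz 2)); (7%N, (Posz 24), (Posz 1)); (5%N, (Posz 24), (Posz 3)); (3%N, (Posz 24), (Posz 2)); (6%N, (Posz 23), (Posz 2)); (8%N, (Posz 23), (Posz 2)); (2%N, (Posz 23), (Posz 1)); (4%N, (Posz 23), (Posz 3)); (7%N, (Posz 22), (Posz 1)); (5%N, (Posz 22), (Posz 4)); (3%N, (Posz 22), (Posz 2)); (1%N, (Posz 22), (Posz 1)); (6%N, (Posz 21), (Posz 3)); (8%N, (Posz 21), (Posz 2)); (2%N, (Posz 21), (Posz 2)); (4%N, (Posz 21), (Posz 3)); (7%N, (Posz 20), (Posz 2)); (5%N, (Posz 20), (Posz 4)); (1%N, (Posz 20), (Posz 1)); (3%N, (Posz 20), (Posz 3)); (6%N, (Posz 19), (Posz 3)); (8%N, (Posz 19), (Posz 2)); (2%N, (Posz 19), (Posz 2)); (4%N, (Posz 19), (Posz 4)); (7%N, (Posz 18), (Posz 1)); (5%N, (Posz 18), (Posz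 5)); (1%N, (Posz 18), (Posz 1)); (3%N, (Posz 18), (Posz 3)); (6%N, (Posz 17), (Posz 3)); (8%N, (Posz 17), (Posz 3)); (2%N, (Posz 17), (Posz 2)); (4%N, (Posz 17), (Posz 4)); (7%N, (Posz 16), (Posz 2)); (5%N, (Posz 16), (Posz 5)); (1%N, (Posz 16), (Posz 1)); (3%N, (Posz 16), (Posz 3)); (6%N, (Posz 15), (Posz 4)); (8%N, (Posz 15), (Posz 2)); (2%N, (Posz 15), (Posz 2)); (4%N, (Posz 15), (Posz 4)); (7%N, (Posz 14), (Posz 2)); (5%N, (Posz 14), (Posz 5)); (1%N, (Posz 14), (Posz 1)); (3%N, (Posz 14), (Posz 3)); (6%N, (Posz 13), (Posz 3)); (8%N, (Posz 13), (Posz 3)); (2%N, (Posz 13), (Posz 2)); (4%N, (Posz 13), (Posz 4)); (7%N, (Posz 12), (Posz 1)); (5%N, (Posz 12), (Posz 5)); (1%N, (Posz 12), (Posz 1)); (3%N, (Posz 12), (Posz 3)); (6%N, (Posz 11), (Posz 3)); (8%N, (Posz 11), (Posz 2)); (2%N, (Posz 11), (Posz 2)); (4%N, (Posz 11), (Posz 4)); (7%N, (Posz 10), (Posz 2)); (1%N, (Posz 10), (Posz 1)); (3%N, (Posz 10), (Posz 3)); (5%N, (Posz 10), (Posz 4)); (6%N, (Posz 9), (Posz 3)); (8%N, (Posz 9), (Posz 2)); (2%N, (Posz 9), (Posz 2)); (4%N, (Posz 9), (Posz 3)); (7%N, (Posz 8), (Posz 1)); (1%N, (Posz 8), (Posz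 1)); (3%N, (Posz 8), (Posz 2)); (5%N, (Posz 8), (Posz 4)); (6%N, (Posz 7), (Posz 2)); (8%N, (Posz 7), (Posz 2)); (2%N, (Posz 7), (Posz 1)); (4%N, (Posz 7), (Posz 3)); (7%N, (Posz 6), (Posz 1)); (3%N, (Posz 6), (Posz 2)); (5%N, (Posz 6), (Posz 3)); (6%N, (Posz 5), (Posz 2)); (8%N, (Posz 5), (Posz 1)); (2%N, (Posz 5), (Posz 1)); (4%N, (Posz 5), (Posz 2)); (7%N, (Posz 4), (Posz 1)); (3%N, (Posz 4), (Posz 1)); (1%N, (Posz 4), (Posz 1)); (5%N, (Posz 4), (Posz 2)); (6%N, (Posz 3), (Posz 1)); (8%N, (Posz 3), (Posz 1)); (4%N, (Posz 3), (Posz 1)); (2%N, (Posz 3), (Posz 1)); (5%N, (Posz 2), (Posz 1)); (3%N, (Posz 2), (Posz 1)); (4%N, (Posz 1), (Posz 1))];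
  [:: (5%N, (Posz 29), (Posz 1)); (4%N, (Posz 28), (Posz 1)); (6%N, (Posz 28), (Posz 1)); (8%N, (Posz 28), (Posz 1)); (3%N, (Posz 27), (Posz 1)); (5%N, (Posz 27), (Posz 2)); (7%N, (Posz 27), (Posz 1)); (6%N, (Posz 26), (Posz 2)); (8%N, (Posz 26), (Posz 1)); (2%N, (Posz 26), (Posz 1)); (4%N, (Posz 26), (Posz 2)); (7%N, (Posz 25), (Posz 1)); (5%N, (Posz 25), (Posz 3)); (1%N, (Posz 25), (Posz 1)); (3%N, (Posz 25), (Posz 2)); (6%N, (Posz 24), (Posz 2)); (8%N, (Posz 24), (Posz 2)); (4%N, (Posz 24), (Posz 3)); (2%N, (Posz 24), (Posz 2)); (7%N, (Posz 23), (Posz 1)); (5%N, (Posz 23), (Posz 4)); (1%N, (Posz 23), (Posz 1)); (3%N, (Posz 23), (Posz 3)); (6%N, (Posz 22), (Posz 3)); (8%N, (Posz 22), (Posz 2)); (4%N, (Posz 22), (Posz 4)); (2%N, (Posz 22), (Posz 2)); (7%N, (Posz 21), (Posz 2)); (5%N, (Posz 21), (Posz 5)); (1%N, (Posz 21), (Posz 1)); (3%N, (Posz 21), (Posz 3)); (6%N, (Posz 20), (Posz 4)); (8%N, (Posz 20), (Posz 3)); (4%N, (Posz 20), (Posz 4)); (2%N, (Posz 20), (Posz 2)); (7%N, (Posz 19), (Posz 2)); (5%N, (Posz 19), (Posz 6)); (1%N, (Posz 19), (Posz 1)); (3%N, (Posz 19), (Posz 3)); (6%N, (Posz 18), (Posz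 4)); (8%N, (Posz 18), (Posz 3)); (4%N, (Posz 18), (Posz 5)); (2%N, (Posz 18), (Posz 2)); (7%N, (Posz 17), (Posz 2)); (5%N, (Posz 17), (Posz 6)); (1%N, (Posz 17), (Posz 1)); (3%N, (Posz 17), (Posz 4)); (6%N, (Posz 16), (Posz 4)); (8%N, (Posz 16), (Posz 3)); (4%N, (Posz 16), (Posz 5)); (2%N, (Posz 16), (Posz 3)); (7%N, (Posz 15), (Posz 2)); (5%N, (Posz 15), (Posz 6)); (1%N, (Posz 15), (Posz 2)); (3%N, (Posz 15), (Posz 4)); (6%N, (Posz 14), (Posz 4)); (8%N, (Posz 14), (Posz 3)); (4%N, (Posz 14), (Posz 5)); (2%N, (Posz 14), (Posz 3)); (7%N, (Posz 13), (Posz 2)); (5%N, (Posz 13), (Posz 6)); (1%N, (Posz 13), (Posz 1)); (3%N, (Posz 13), (Posz 4)); (6%N, (Posz 12), (Posz 4)); (8%N, (Posz 12), (Posz 3)); (4%N, (Posz 12), (Posz 5)); (2%N, (Posz 12), (Posz 2)); (7%N, (Posz 11), (Posz 2)); (5%N, (Posz 11), (Posz 6)); (1%N, (Posz 11), (Posz 1)); (3%N, (Posz 11), (Posz 3)); (6%N, (Posz 10), (Posz 4)); (8%N, (Posz 10), (Posz 3)); (4%N, (Posz 10), (Posz 4)); (2%N, (Posz 10), (Posz 2)); (7%N, (Posz 9), (Posz 2)); (5%N, (Posz 9), (Posz 5)); (1%N, (Posz 9), (Posz 1)); (3%N, (Posz 9), (Posz 3)); (6%N, (Posz 8), (Posz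 3)); (8%N, (Posz 8), (Posz 2)); (4%N, (Posz 8), (Posz 4)); (2%N, (Posz 8), (Posz 2)); (7%N, (Posz 7), (Posz 1)); (1%N, (Posz 7), (Posz 1)); (3%N, (Posz 7), (Posz 3)); (5%N, (Posz 7), (Posz 4)); (6%N, (Posz 6), (Posz 2)); (8%N, (Posz 6), (Posz 2)); (4%N, (Posz 6), (Posz 3)); (2%N, (Posz 6), (Posz 2)); (7%N, (Posz 5), (Posz 1)); (1%N, (Posz 5), (Posz 1)); (5%N, (Posz 5), (Posz 3)); (3%N, (Posz 5), (Posz 2)); (6%N, (Posz 4), (Posz 2)); (8%N, (Posz 4), (Posz 1)); (2%N, (Posz 4), (Posz 1)); (4%N, (Posz 4), (Posz 2)); (7%N, (Posz 3), (Posz 1)); (3%N, (Posz 3), (Posz 1)); (5%N, (Posz 3), (Posz 2)); (6%N, (Posz 2), (Posz 1)); (8%N, (Posz 2), (Posz 1)); (4%N, (Posz 2), (Posz 1)); (5%N, (Posz 1), (Posz 1))];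
  [:: (6%N, (Posz 29), (Posz 1)); (5%N, (Posz 28), (Posz 1)); (7%N, (Posz 28), (Posz 1)); (4%N, (Posz 27), (Posz 1)); (8%N, (Posz 27), (Posz 1)); (6%N, (Posz 27), (Posz 1)); (3%N, (Posz 26), (Posz 1)); (5%N, (Posz 26), (Posz 2)); (8%N, (Posz 25), (Posz 1)); (6%N, (Posz 25), (Posz 1)); (2%N, (Posz 25), (Posz 1)); (4%N, (Posz 25), (Posz 2)); (7%N, (Posz 24), (Posz 1)); (1%N, (Posz 24), (Posz 1)); (3%N, (Posz 24), (Posz 2)); (5%N, (Posz 24), (Posz 2)); (8%N, (Posz 23), (Posz 1)); (2%N, (Posz 23), (Posz 2)); (4%N, (Posz 23), (Posz 2)); (6%N, (Posz 23), (Posz 2)); (7%N, (Posz 22), (Posz 1)); (1%N, (Posz 22), (Posz 1)); (5%N, (Posz 22), (Posz 3)); (3%N, (Posz 22), (Posz 2)); (8%N, (Posz 21), (Posz 2)); (2%N, (Posz 21), (Posz 1)); (4%N, (Posz 21), (Posz 3)); (6%N, (Posz 21), (Posz 2)); (7%N, (Posz 20), (Posz 1)); (5%N, (Posz 20), (Posz 4)); (3%N, (Posz 20), (Posz 2)); (8%N, (Posz 19), (Posz 2)); (2%N, (Posz 19), (Posz 1)); (4%N, (Posz 19), (Posz 3)); (6%N, (Posz 19), (Posz 3)); (7%N, (Posz 18), (Posz 2)); (5%N, (Posz 18), (Posz 4)); (3%N, (Posz 18), (Posz 2)); (1%N, (Posz 18), (Posz 1)); (8%N, (Posz 17), (Posz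 2)); (2%N, (Posz 17), (Posz 2)); (4%N, (Posz 17), (Posz 3)); (6%N, (Posz 17), (Posz 3)); (7%N, (Posz 16), (Posz 1)); (5%N, (Posz 16), (Posz 4)); (1%N, (Posz 16), (Posz 1)); (3%N, (Posz 16), (Posz 3)); (8%N, (Posz 15), (Posz 2)); (2%N, (Posz 15), (Posz 2)); (4%N, (Posz 15), (Posz 4)); (6%N, (Posz 15), (Posz 2)); (7%N, (Posz 14), (Posz 1)); (5%N, (Posz 14), (Posz 4)); (1%N, (Posz 14), (Posz 1)); (3%N, (Posz 14), (Posz 3)); (8%N, (Posz 13), (Posz 2)); (2%N, (Posz 13), (Posz 2)); (6%N, (Posz 13), (Posz 3)); (4%N, (Posz 13), (Posz 3)); (7%N, (Posz 12), (Posz 2)); (5%N, (Posz 12), (Posz 4)); (1%N, (Posz 12), (Posz 1)); (3%N, (Posz 12), (Posz 2)); (8%N, (Posz 11), (Posz 2)); (2%N, (Posz 11), (Posz 1)); (6%N, (Posz 11), (Posz 3)); (4%N, (Posz 11), (Posz 3)); (7%N, (Posz 10), (Posz 1)); (5%N, (Posz 10), (Posz 4)); (3%N, (Posz 10), (Posz 2)); (8%N, (Posz 9), (Posz 2)); (2%N, (Posz 9), (Posz 1)); (6%N, (Posz 9), (Posz 2)); (4%N, (Posz 9), (Posz 3)); (7%N, (Posz 8), (Posz 1)); (3%N, (Posz 8), (Posz 2)); (1%N, (Posz 8), (Posz 1)); (5%N, (Posz 8), (Posz 3)); (8%N, (Posz 7), (Posz 1)); (2%N, (Posz 7), (Posz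 2)); (6%N, (Posz 7), (Posz 2)); (4%N, (Posz 7), (Posz 2)); (7%N, (Posz 6), (Posz 1)); (1%N, (Posz 6), (Posz 1)); (3%N, (Posz 6), (Posz 2)); (5%N, (Posz 6), (Posz 2)); (8%N, (Posz 5), (Posz 1)); (2%N, (Posz 5), (Posz 1)); (6%N, (Posz 5), (Posz 1)); (4%N, (Posz 5), (Posz 2)); (3%N, (Posz 4), (Posz 1)); (5%N, (Posz 4), (Posz 2)); (8%N, (Posz 3), (Posz 1)); (6%N, (Posz 3), (Posz 1)); (4%N, (Posz 3), (Posz 1)); (7%N, (Posz 2), (Posz 1)); (5%N, (Posz 2), (Posz 1)); (6%N, (Posz 1), (Posz 1))];
  [:: (7%N, (Posz 29), (Posz 1)); (6%N, (Posz 28), (Posz 1)); (5%N, (Posz 27), (Posz 1)); (4%N, (Posz 26), (Posz 1)); (8%N, (Posz 26), (Posz 1)); (3%N, (Posz 25), (Posz 1)); (5%N, (Posz 25), (Posz 1)); (2%N, (Posz 24), (Posz 1)); (4%N, (Posz 24), (Posz 1)); (6%N, (Posz 24), (Posz 1)); (1%N, (Posz 23), (Posz 1)); (3%N, (Posz 23), (Posz 1)); (5%N, (Posz 23), (Posz 1)); (7%N, (Posz 23), (Posz 1)); (2%N, (Posz 22), (Posz 1)); (4%N, (Posz 22), (Posz 1)); (8%N, (Posz 22), (Posz 1)); (6%N, (Posz 22), (Posz 1)); (3%N, (Posz 21), (Posz 1)); (5%N, (Posz 21), (Posz 2)); (8%N, (Posz 20), (Posz 1)); (6%N, (Posz 20),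 (Posz 1)); (4%N, (Posz 20), (Posz 2)); (3%N, (Posz 19), (Posz 1)); (7%N, (Posz 19), (Posz 1)); (5%N, (Posz 19), (Posz 2)); (8%N, (Posz 18), (Posz 1)); (4%N, (Posz 18), (Posz 1)); (2%N, (Posz 18), (Posz 1)); (6%N, (Posz 18), (Posz 2)); (7%N, (Posz 17), (Posz 1)); (1%N, (Posz 17), (Posz 1)); (3%N, (Posz 17), (Posz 1)); (5%N, (Posz 17), (Posz 2)); (8%N, (Posz 16), (Posz 1)); (6%N, (Posz 16), (Posz 1)); (2%N, (Posz 16), (Posz 1)); (4%N, (Posz 16), (Posz 2)); (3%N, (Posz 15), (Posz 2)); (5%N, (Posz 15), (Posz 2)); (8%N, (Posz 14), (Posz 1)); (6%N, (Posz 14), (Posz 1)); (2%N, (Posz 14), (Posz 1)); (4%N, (Posz 14), (Posz 2)); (3%N, (Posz 13), (Posz 1)); (7%N, (Posz 13), (Posz 1)); (1%N, (Posz 13), (Posz 1)); (5%N, (Posz 13), (Posz 2)); (8%N, (Posz 12), (Posz 1)); (4%N, (Posz 12), (Posz 1)); (2%N, (Posz 12), (Posz 1)); (6%N, (Posz 12), (Posz 2)); (7%N, (Posz 11), (Posz 1)); (3%N, (Posz 11), (Posz 1)); (5%N, (Posz 11), (Posz 2)); (8%N, (Posz 10), (Posz 1)); (6%N, (Posz 10), (Posz 1)); (4%N, (Posz 10), (Posz 2)); (3%N, (Posz 9), (Posz 1)); (5%N, (Posz 9), (Posz 2)); (8%N, (Posz 8), (Posz 1)); (6%N, (Posz 8),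 (Posz 1)); (4%N, (Posz 8), (Posz 1)); (2%N, (Posz 8), (Posz 1)); (7%N, (Posz 7), (Posz 1)); (5%N, (Posz 7), (Posz 1)); (1%N, (Posz 7), (Posz 1)); (3%N, (Posz 7), (Posz 1)); (6%N, (Posz 6), (Posz 1)); (2%N, (Posz 6), (Posz 1)); (4%N, (Posz 6), (Posz 1)); (3%N, (Posz 5), (Posz 1)); (5%N, (Posz 5), (Posz 1)); (4%N, (Posz 4), (Posz 1)); (8%N, (Posz 4), (Posz 1)); (5%N, (Posz 3), (Posz 1)); (6%N, (Posz 2), (Posz 1)); (7%N, (Posz 1), (Posz 1))];
  [:: (8%N, (Posz 29), (Posz 1)); (5%N, (Posz 28), (Posz 1)); (4%N, (Posz 27), (Posz 1)); (6%N, (Posz 27), (Posz 1)); (3%N, (Posz 26), (Posz 1)); (5%N, (Posz 26), (Posz 1)); (7%N, (Posz 26), (Posz 1)); (2%N, (Posz 25), (Posz 1)); (4%N, (Posz 25), (Posz 1)); (8%N, (Posz 25), (Posz 1)); (6%N, (Posz 25), (Posz 1)); (1%N, (Posz 24), (Posz 1)); (3%N, (Posz 24), (Posz 1)); (5%N, (Posz 24), (Posz 2)); (8%N, (Posz 23), (Posz 1)); (6%N, (Posz 23), (Posz 1)); (2%N, (Posz 23), (Posz 1)); (4%N, (Posz 23), (Posz 2)); (7%N, (Posz 22), (Posz 1)); (3%N, (Posz 22), (Posz 2)); (5%N, (Posz 22), (Posz 2)); (8%N, (Posz 21), (Posz 1)); (2%N, (Posz 21), (Posz 1)); (4%N, (Posz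 21), (Posz 2)); (6%N, (Posz 21), (Posz 2)); (7%N, (Posz 20), (Posz 1)); (3%N, (Posz 20), (Posz 1)); (5%N, (Posz 20), (Posz 3)); (1%N, (Posz 20), (Posz 1)); (8%N, (Posz 19), (Posz 2)); (4%N, (Posz 19), (Posz 2)); (6%N, (Posz 19), (Posz 2)); (2%N, (Posz 19), (Posz 1)); (7%N, (Posz 18), (Posz 1)); (3%N, (Posz 18), (Posz 2)); (5%N, (Posz 18), (Posz 3)); (8%N, (Posz 17), (Posz 1)); (6%N, (Posz 17), (Posz 2)); (2%N, (Posz 17), (Posz 1)); (4%N, (Posz 17), (Posz 3)); (7%N, (Posz 16), (Posz 1)); (3%N, (Posz 16), (Posz 2)); (1%N, (Posz 16), (Posz 1)); (5%N, (Posz 16), (Posz 3)); (8%N, (Posz 15), (Posz 2)); (6%N, (Posz 15), (Posz 2)); (2%N, (Posz 15), (Posz 2)); (4%N, (Posz 15), (Posz 2)); (7%N, (Posz 14), (Posz 1)); (1%N, (Posz 14), (Posz 1)); (5%N, (Posz 14), (Posz 3)); (3%N, (Posz 14), (Posz 2)); (8%N, (Posz 13), (Posz 1)); (6%N, (Posz 13), (Posz 2)); (2%N, (Posz 13), (Posz 1)); (4%N, (Posz 13), (Posz 3)); (7%N, (Posz 12), (Posz 1)); (3%N, (Posz 12), (Posz 2)); (5%N, (Posz 12), (Posz 3)); (8%N, (Posz 11), (Posz 2)); (6%N, (Posz 11), (Posz 2)); (2%N, (Posz 11), (Posz 1)); (4%N, (Posz 11), (Posz 2)); (7%N, (Posz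 10), (Posz 1)); (3%N, (Posz 10), (Posz 1)); (5%N, (Posz 10), (Posz 3)); (1%N, (Posz 10), (Posz 1)); (8%N, (Posz 9), (Posz 1)); (6%N, (Posz 9), (Posz 2)); (4%N, (Posz 9), (Posz 2)); (2%N, (Posz 9), (Posz 1)); (7%N, (Posz 8), (Posz 1)); (3%N, (Posz 8), (Posz 2)); (5%N, (Posz 8), (Posz 2)); (8%N, (Posz 7), (Posz 1)); (6%N, (Posz 7), (Posz 1)); (2%N, (Posz 7), (Posz 1)); (4%N, (Posz 7), (Posz 2)); (3%N, (Posz 6), (Posz 1)); (1%N, (Posz 6), (Posz 1)); (5%N, (Posz 6), (Posz 2)); (8%N, (Posz 5), (Posz 1)); (6%N, (Posz 5), (Posz 1)); (4%N, (Posz 5), (Posz 1)); (2%N, (Posz 5), (Posz 1)); (7%N, (Posz 4), (Posz 1)); (5%N, (Posz 4), (Posz 1)); (3%N, (Posz 4), (Posz 1)); (6%N, (Posz 3), (Posz 1)); (4%N, (Posz 3), (Posz 1)); (5%N, (Posz 2), (Posz 1)); (8%N, (Posz 1), (Posz 1))]].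

Definition cert_F4_T : seq (seq (nat * int * int)) :=
  [:: [:: (1%N, (Posz 16), (Posz 1)); (2%N, (Posz 14), (Posz 1)); (3%N, (Posz 13), (Posz 1)); (2%N, (Posz 12), (Posz 1)); (4%N, (Posz 12), (Posz 1)); (3%N, (Posz 11), (Posz 1)); (1%N, (Posz 10), (Posz 1)); (2%N, (Posz 10), (Posz 1)); (2%N, (Posz 8), (Posz 1)); (1%N, (Posz 8), (Posz 1)); (3%N, (Posz 7), (Posz 1)); (2%N, (Posz 6), (Posz 1)); (4%N, (Posz 6), (Posz 1)); (3%N, (Posz 5), (Posz 1)); (2%N, (Posz 4), (Posz 1)); (1%N, (Posz 2), (Posz 1))];
  [:: (2%N, (Posz 16), (Posz 1)); (3%N, (Posz 15), (Posz 1)); (1%N, (Posz 14), (Posz 1)); (2%N, (Posz 14), (Posz 1)); (4%N, (Posz 14), (Posz 1)); (3%N, (Posz 13), (Posz 1)); (2%N, (Posz 12), (Posz 2)); (1%N, (Posz 12), (Posz 1)); (3%N, (Posz 11), (Posz 1)); (1%N, (Posz 10), (Posz 1)); (2%N, (Posz 10), (Posz 2)); (4%N, (Posz 10), (Posz 1)); (3%N, (Posz 9), (Posz 2)); (1%N, (Posz 8), (Posz 1)); (2%N, (Posz 8), (Posz 2)); (4%N, (Posz 8), (Posz 1)); (3%N, (Posz 7), (Posz 1)); (1%N, (Posz 6), (Posz 1)); (2%N, (Posz 6), (Posz 2)); (3%N, (Posz 5), (Posz 1)); (1%N, (Posz 4), (Posz 1)); (2%N, (Posz 4), (Posz 1));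 (4%N, (Posz 4), (Posz 1)); (3%N, (Posz 3), (Posz 1)); (2%N, (Posz 2), (Posz 1))];
  [:: (3%N, (Posz 17), (Posz 1)); (2%N, (Posz 16), (Posz 1)); (4%N, (Posz 16), (Posz 1)); (3%N, (Posz 15), (Posz 1)); (2%N, (Posz 14), (Posz 2)); (1%N, (Posz 14), (Posz 1)); (3%N, (Posz 13), (Posz 1)); (1%N, (Posz 12), (Posz 2)); (2%N, (Posz 12), (Posz 2)); (4%N, (Posz 12), (Posz 1)); (3%N, (Posz 11), (Posz 2)); (2%N, (Posz 10), (Posz 3)); (1%N, (Posz 10), (Posz 1)); (4%N, (Posz 10), (Posz 1)); (3%N, (Posz 9), (Posz 2)); (1%N, (Posz 8), (Posz 1)); (2%N, (Posz 8), (Posz 3)); (4%N, (Posz 8), (Posz 1)); (3%N, (Posz 7), (Posz 2)); (1%N, (Posz 6), (Posz 2)); (2%N, (Posz 6), (Posz 2)); (4%N, (Posz 6), (Posz 1)); (3%N, (Posz 5), (Posz 1)); (1%N, (Posz 4), (Posz 1)); (2%N, (Posz 4), (Posz 2)); (3%N, (Posz 3), (Posz 1)); (2%N, (Posz 2), (Posz 1)); (4%N, (Posz 2), (Posz 1)); (3%N, (Posz 1), (Posz 1))];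
  [:: (4%N, (Posz 17), (Posz 1)); (3%N, (Posz 16), (Posz 1)); (2%N, (Posz 15), (Posz 1)); (2%N, (Posz 13), (Posz 1)); (1%N, (Posz 13), (Posz 1)); (3%N, (Posz 12), (Posz 1)); (1%N, (Posz 11), (Posz 1)); (2%N, (Posz 11), (Posz 1)); (4%N, (Posz 11), (Posz 1)); (3%N, (Posz 10), (Posz 1)); (2%N, (Posz 9), (Posz 2)); (3%N, (Posz 8), (Posz 1)); (1%N, (Posz 7), (Posz 1)); (2%N, (Posz 7), (Posz 1)); (4%N, (Posz 7), (Posz 1)); (3%N, (Posz 6), (Posz 1)); (1%N, (Posz 5), (Posz 1)); (2%N, (Posz 5), (Posz 1)); (2%N, (Posz 3), (Posz 1)); (3%N, (Posz 2), (Posz 1)); (4%N, (Posz 1), (Posz 1))]].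

Definition cert_F4_Y : seq (seq (nat * int * int)) :=
  [:: [:: (1%N, (Posz 16), (Posz 1)); (2%N, (Posz 14), (Posz 1)); (3%N, (Posz 14), (Posz 1)); (2%N, (Posz 12), (Posz 1)); (4%N, (Posz 13), (Posz 1)); (3%N, (Posz 12), (Posz 2)); (2%N, (Posz 10), (Posz 1)); (1%N, (Posz 10), (Posz 1)); (4%N, (Posz 11), (Posz 1)); (3%N, (Posz 10), (Posz 1)); (1%N, (Posz 8), (Posz 1)); (2%N, (Posz 8), (Posz 1)); (3%N, (Posz 8), (Posz 1)); (2%N, (Posz 6), (Posz 1)); (4%N, (Posz 7), (Posz 1)); (3%N, (Posz 6), (Posz 2)); (2%N, (Posz 4), (Posz 1)); (4%N, (Posz 5), (Posz 1)); (3%N, (Posz 4), (Posz 1)); (1%N, (Posz 2), (Posz 1))];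
  [:: (2%N, (Posz 16), (Posz 1)); (3%N, (Posz 16), (Posz 1)); (1%N, (Posz 14), (Posz 1)); (2%N, (Posz 14), (Posz 1)); (4%N, (Posz 15), (Posz 1)); (3%N, (Posz 14), (Posz 2)); (1%N, (Posz 12), (Posz 1)); (2%N, (Posz 12), (Posz 2)); (4%N, (Posz 13), (Posz 1)); (3%N, (Posz 12), (Posz 2)); (1%N, (Posz 10), (Posz 1)); (2%N, (Posz 10), (Posz 2)); (4%N, (Posz 11), (Posz 1)); (3%N, (Posz 10), (Posz 3)); (1%N, (Posz 8), (Posz 1)); (2%N, (Posz 8), (Posz 2)); (4%N, (Posz 9), (Posz 2)); (3%N, (Posz 8), (Posz 3)); (1%N, (Posz 6), (Posz 1)); (2%N, (Posz 6), (Posz 2)); (4%N, (Posz 7), (Posz 1)); (3%N, (Posz 6), (Posz 2)); (1%N, (Posz 4), (Posz 1)); (2%N, (Posz 4), (Posz 1)); (4%N, (Posz 5), (Posz 1)); (3%N, (Posz 4), (Posz 2)); (2%N, (Posz 2), (Posz 1)); (4%N, (Posz 3), (Posz 1)); (3%N, (Posz 2), (Posz 1))];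
  [:: (3%N, (Posz 17), (Posz 1)); (2%N, (Posz 15), (Posz 1)); (4%N, (Posz 16), (Posz 1)); (3%N, (Posz 15), (Posz 1)); (1%N, (Posz 13), (Posz 1)); (2%N, (Posz 13), (Posz 1)); (3%N, (Posz 13), (Posz 1)); (1%N, (Posz 11), (Posz 1)); (2%N, (Posz 11), (Posz 1)); (4%N, (Posz 12), (Posz 1)); (3%N, (Posz 11), (Posz 2)); (2%N, (Posz 9), (Posz 2)); (4%N, (Posz 10), (Posz 1)); (3%N, (Posz 9), (Posz 2)); (1%N, (Posz 7), (Posz 1)); (2%N, (Posz 7), (Posz 1)); (4%N, (Posz 8), (Posz 1)); (3%N, (Posz 7), (Posz 2)); (2%N, (Posz 5), (Posz 1)); (1%N, (Posz 5), (Posz 1)); (4%N, (Posz 6), (Posz 1)); (3%N, (Posz 5), (Posz 1)); (2%N, (Posz 3), (Posz 1)); (3%N, (Posz 3), (Posz 1)); (4%N, (Posz 2), (Posz 1)); (3%N, (Posz 1), (Posz 1))];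
  [:: (4%N, (Posz 17), (Posz 1)); (3%N, (Posz 16), (Posz 1)); (2%N, (Posz 14), (Posz 1)); (1%N, (Posz 12), (Posz 1)); (3%N, (Posz 12), (Posz 1)); (2%N, (Posz 10), (Posz 1)); (4%N, (Posz 11), (Posz 1)); (3%N, (Posz 10), (Posz 1)); (2%N, (Posz 8), (Posz 1)); (3%N, (Posz 8), (Posz 1)); (1%N, (Posz 6), (Posz 1)); (4%N, (Posz 7), (Posz 1)); (3%N, (Posz 6), (Posz 1)); (2%N, (Posz 4), (Posz 1)); (3%N, (Posz 2), (Posz 1)); (4%N, (Posz 1), (Posz 1))]].

Definition cert_G2_T : seq (seq (nat * int * int)) :=
  [:: [:: (1%N, (Posz 9), (Posz 1)); (2%N, (Posz 8), (Posz 1)); (1%N, (Posz 7), (Posz 1)); (1%N, (Posz 5), (Posz 1)); (2%N, (Posz 4), (Posz 1)); (1%N, (Posz 3), (Posz 1))];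
  [:: (2%N, (Posz 11), (Posz 1)); (1%N, (Posz 10), (Posz 1)); (1%N, (Posz 8), (Posz 1)); (2%N, (Posz 7), (Posz 1)); (1%N, (Posz 6), (Posz 2)); (2%N, (Posz 5), (Posz 1)); (1%N, (Posz 4), (Posz 1)); (1%N, (Posz 2), (Posz 1)); (2%N, (Posz 1), (Posz 1))]].

Definition cert_G2_Y : seq (seq (nat * int * int)) :=
  [:: [:: (1%N, (Posz 9), (Posz 1)); (2%N, (Posz 10), (Posz 1)); (1%N, (Posz 7), (Posz 1)); (2%N, (Posz 8), (Posz 1)); (1%N, (Posz 5), (Posz 1)); (2%N, (Posz 6), (Posz 2)); (1%N, (Posz 3), (Posz 1)); (2%N, (Posz 4), (Posz 1)); (2%N, (Posz 2), (Posz 1))];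
  [:: (2%N, (Posz 11), (Posz 1)); (1%N, (Posz 8), (Posz 1)); (2%N, (Posz 7), (Posz 1)); (1%N, (Posz 4), (Posz 1)); (2%N, (Posz 5), (Posz 1)); (2%N, (Posz 1), (Posz 1))]].


Lemma checks_E6 : all (fun a => check TE6 (relE TE6) a (nth [::] cert_E6_T a.-1)) (iota 1 6).
Proof. by vm_compute. Qed.
Lemma checks_E7 : all (fun a => check TE7 (relE TE7) a (nth [::] cert_E7_T a.-1)) (iota 1 7).
Proof. by vm_compute. Qed.
Lemma checks_E8 : all (fun a => check TE8 (relE TE8) a (nth [::] cert_E8_T a.-1)) (iota 1 8).
Proof. by vm_compute. Qed.
Lemma checks_F4T : all (fun a => check TF4 relF4T a (nth [::] cert_F4_T a.-1)) (iota 1 4).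
Proof. by vm_compute. Qed.
Lemma checks_F4Y : all (fun a => check TF4 relF4Y a (nth [::] cert_F4_Y a.-1)) (iota 1 4).
Proof. by vm_compute. Qed.
Lemma checks_G2T : all (fun a => check TG2 relG2T a (nth [::] cert_G2_T a.-1)) (iota 1 2).
Proof. by vm_compute. Qed.
Lemma checks_G2Y : all (fun a => check TG2 relG2Y a (nth [::] cert_G2_Y a.-1)) (iota 1 2).
Proof. by vm_compute. Qed.

Section Exc.
Variable G : zmodType.
Variable F : nat -> int -> G.

Lemma exc_gen d rel cert :
  (forall b c k, (1 <= b <= rank d)%N -> ev' F k (rel b c).1 = ev' F k (rel b c).2) ->
  all (fun a => check d rel a (nth [::] cert a.-1)) (iota 1 (rank d)) ->
  forall a k, (1 <= a <= rank d)%N ->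
  F a (k + (tnum d * hdual d)%N%:Z) = - F (omega d a) k.
Proof.
move=> Hr /allP Ha a k Hai; apply: (check_ok Hr).
by apply: Ha; rewrite mem_iota; lia.
Qed.

Lemma exc_E d : (d = TE6 \/ d = TE7 \/ d = TE8) ->
  (forall b k, (1 <= b <= rank d)%N ->
    F b (k - 1) + F b (k + 1) = \sum_(b' <- iota 1 (rank d) | adj d b b') F b' k) ->
  forall a k, (1 <= a <= rank d)%N ->
  F a (k + (tnum d * hdual d)%N%:Z) = - F (omega d a) k.
Proof.
move=> Hd H; have Hr := relE_ok H.
case: Hd => [E|[E|E]]; subst d; [apply: exc_gen Hr checks_E6 | apply: exc_gen Hr checks_E7
  | apply: exc_gen Hr checks_E8].
Qed.

Lemma exc_F4T : is_T_system TF4 F -> forall a k, (1 <= a <= 4)%N ->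
  F a (k + (tnum TF4 * hdual TF4)%N%:Z) = - F (omega TF4 a) k.
Proof.
move=> H; apply: (exc_gen (rel := relF4T)) checks_F4T => b c k Hb.
have := H b (k + c) Hb; rewrite /T_rel /ev'.
case: b Hb => [|[|[|[|[|b]]]]] Hb //= E;
  by rewrite -!addrA in E; rewrite !big_cons !big_nil /= !addr0 E.
Qed.

Lemma exc_F4Y : is_Y_system TF4 F -> forall a k, (1 <= a <= 4)%N ->
  F a (k + (tnum TF4 * hdual TF4)%N%:Z) = - F (omega TF4 a) k.
Proof.
move=> H; apply: (exc_gen (rel := relF4Y)) checks_F4Y => b c k Hb.
have := H b (k + c) Hb; rewrite /Y_rel /ev'.
case: b Hb => [|[|[|[|[|b]]]]] Hb //= E;
  by rewrite -!addrA in E; rewrite !big_cons !big_nil /= !addr0 E.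
Qed.

Lemma exc_G2T : is_T_system TG2 F -> forall a k, (1 <= a <= 2)%N ->
  F a (k + (tnum TG2 * hdual TG2)%N%:Z) = - F (omega TG2 a) k.
Proof.
move=> H; apply: (exc_gen (rel := relG2T)) checks_G2T => b c k Hb.
have := H b (k + c) Hb; rewrite /T_rel /ev'.
case: b Hb => [|[|[|b]]] Hb //= E;
  by rewrite -!addrA in E; rewrite !big_cons !big_nil /= !addr0 E.
Qed.

Lemma exc_G2Y : is_Y_system TG2 F -> forall a k, (1 <= a <= 2)%N ->
  F a (k + (tnum TG2 * hdual TG2)%N%:Z) = - F (omega TG2 a) k.
Proof.
move=> H; apply: (exc_gen (rel := relG2Y)) checks_G2Y => b c k Hb.
have := H b (k + c) Hb; rewrite /Y_rel /ev'.
case: b Hb => [|[|[|b]]] Hb //= E;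
  by rewrite -!addrA in E; rewrite !big_cons !big_nil /= !addr0 E.
Qed.
End Exc.


Section DSum.
Variable G : zmodType.
Variable T : nat -> int -> G.
Variable n : nat.
Hypothesis HT : forall a k, (1 <= a <= n.+3)%N ->
  T a (k - 1) + T a (k + 1) = \sum_(b <- iota 1 n.+3 | adj (TD n.+3) a b) T b k.

Lemma adjD a b : adj (TD n.+3) a b =
  [|| (b == a.+1) && (1 <= a <= n), (a == b.+1) && (1 <= b <= n),
      (a == n.+1) && ((b == n.+2) || (b == n.+3)) |
      (b == n.+1) && ((a == n.+2) || (a == n.+3))]%N.
Proof.
rewrite /adj /sl_edges.
have -> : (n.+3 - 3 = n)%N by lia.
have -> : (n.+3 - 2 = n.+1)%N by lia.
have -> : (n.+3 - 1 = n.+2)%N by lia.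
rewrite !mem_cat !mem_pairs !inE !xpair_eqE !mem_iota.
apply/idP/idP; lia.
Qed.

Lemma famD_sl a k : (1 <= a <= n.+3)%N ->
  T a (k + (n.+2%:Z + n.+2%:Z)) = - T (omega (TD n.+3) a) k.
Proof.
apply: famD.
- move=> b k' Hb; rewrite HT; last lia.
  rewrite (@sum_filter_mem _ _ [:: b.-1; b.+1]) ?iota_uniq //; last first.
    move=> c; rewrite mem_iota adjD !inE => Hc; apply/idP/idP; lia.
    by rewrite /= inE; apply/negP; lia.
  rewrite !big_cons big_nil !mem_iota /Fz.
  case: (b =P 1%N) => [->|Hb1] /=.
    by rewrite add0r addr0.
  have -> : (b.-1 == 0%N) = false by lia.
  rewrite ifT; last lia.
  by rewrite ifT ?addr0; last lia.
- move=> k'; rewrite HT; last lia.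
  rewrite (@sum_filter_mem _ _ [:: n; n.+2; n.+3]) ?iota_uniq //; last first.
    move=> c; rewrite mem_iota adjD !inE => Hc; apply/idP/idP; lia.
    by rewrite /= !inE; apply/andP; split; [apply/negP|]; lia.
  rewrite !big_cons big_nil !mem_iota /Fz.
  case: (n =P 0%N) => [->|Hn] /=; first by rewrite add0r addr0.
  rewrite ifT; last lia. rewrite ifT; last lia. by rewrite ifT ?addr0; last lia.
- move=> k'; rewrite HT; last lia.
  rewrite (@sum_filter_mem _ _ [:: n.+1]) ?iota_uniq //; last first.
    move=> c; rewrite mem_iota adjD !inE => Hc; apply/idP/idP; lia.
  by rewrite big_cons big_nil mem_iota ifT ?addr0; last lia.
- move=> k'; rewrite HT; last lia.
  rewrite (@sum_filter_mem _ _ [:: n.+1]) ?iota_uniq //; last first.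
    move=> c; rewrite mem_iota adjD !inE => Hc; apply/idP/idP; lia.
  by rewrite big_cons big_nil mem_iota ifT ?addr0; last lia.
Qed.
End DSum.

Lemma omega_ok d a : valid_dynkin d -> (1 <= a <= rank d)%N ->
  (1 <= omega d a <= rank d)%N /\ omega d (omega d a) = a.
Proof.
case: d => [r|r|r|r| | | | | ] /= hd Ha //.
- split; lia.
- case: (odd r) => //.
  case: (a =P r.-1) => [->|H1].
    rewrite eqxx; have -> : (r == r.-1) = false by lia.
    split; [lia| by []].
  case: (a =P r) => [->|H2].
    rewrite eqxx; split; [lia|].
    by [].
  by rewrite (introF eqP H1) (introF eqP H2).
- by case: a Ha => [|[|[|[|[|[|[|a]]]]]]].
Qed.

Section Half.
Variable G : zmodType.

Lemma half_T d (hd : valid_dynkin d) (T : nat -> int -> G) : is_T_system d T ->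
  forall a k, (1 <= a <= rank d)%N ->
  T a (k + (tnum d * hdual d)%N%:Z) = - T (omega d a) k.
Proof.
case: d hd => [r|r|r|r| | | | | ] /= hd HT a k Ha.
-
  case: r hd HT Ha => // m _ HT Ha; rewrite mul1n.
  apply: famA => // b k' Hb; exact: HT.
-
  case: r hd HT Ha => [|[|m]] // _ HT Ha.
  have := @famW _ T m 2 1.
  have -> : (1 + 2 * m.+1%:Z + (1 + 2 * m.+1%:Z)) = (2 * (2 * m.+2 - 1))%N%:Z by lia.
  apply => //.
  + move=> b k' Hb; have := HT b k' (ltac:(rewrite /=; lia)); rewrite /T_rel.
    have -> : (m.+2 - 2 = m)%N by lia.
    case: (ltngtP b m.+1) => [lt|gt|->].
    * by rewrite ifT //; lia.
    * lia.
    * by rewrite ltnn ?eqxx /=.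
  + move=> k'; have := HT m.+2 k' (ltac:(rewrite /=; lia)); rewrite /T_rel.
    have -> : (m.+2 - 2 = m)%N by lia.
    rewrite ifF; last lia. rewrite ifF; last lia.
    have -> : k' - (1 - 2) = k' + 1 by ring.
    have -> : k' + (1 - 2) = k' - 1 by ring.
    by move=> ->; rewrite addrC.
-
  case: r hd HT Ha => [|[|m]] // _ HT Ha.
  have := @famR _ T m 1 2.
  have -> : (2 + 1 * m.+1%:Z + (2 + 1 * m.+1%:Z)) = (2 * m.+3)%N%:Z by lia.
  apply => //.
  + move=> b k' Hb; have := HT b k' (ltac:(rewrite /=; lia)); rewrite /T_rel.
    have -> : (m.+2 - 2 = m)%N by lia.
    by rewrite ifT //; lia.
  + move=> k'; have := HT m.+1 k' (ltac:(rewrite /=; lia)); rewrite /T_rel.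
    have -> : (m.+2 - 2 = m)%N by lia.
    rewrite ifF; last lia. rewrite /= eqxx.
    have -> : (2 - 1 : int) = 1 by [].
    by rewrite addrA.
  + move=> k'; have := HT m.+2 k' (ltac:(rewrite /=; lia)); rewrite /T_rel.
    have -> : (m.+2 - 2 = m)%N by lia.
    rewrite ifF; last lia. by rewrite ifF; last lia.
-
  case: r hd HT Ha => [|[|[|n]]] // _ HT Ha.
  have -> : (1 * (2 * n.+3 - 2))%N%:Z = n.+2%:Z + n.+2%:Z by lia.
  apply: (@famD_sl _ T n) => // b k' Hb; exact: HT.
- apply: (@exc_E _ T TE6); [by left| move=> b k' Hb; exact: HT | by []].
- apply: (@exc_E _ T TE7); [by right; left| move=> b k' Hb; exact: HT | by []].
- apply: (@exc_E _ T TE8); [by right; right| move=> b k' Hb; exact: HT | by []].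
- exact: exc_F4T.
- exact: exc_G2T.
Qed.
Lemma half_Y d (hd : valid_dynkin d) (Y : nat -> int -> G) : is_Y_system d Y ->
  forall a k, (1 <= a <= rank d)%N ->
  Y a (k + (tnum d * hdual d)%N%:Z) = - Y (omega d a) k.
Proof.
case: d hd => [r|r|r|r| | | | | ] /= hd HY a k Ha.
-
  case: r hd HY Ha => // m _ HY Ha; rewrite mul1n.
  apply: famA => // b k' Hb; exact: HY.
-
  case: r hd HY Ha => [|[|m]] // _ HY Ha.
  have := @famR _ Y m 2 1.
  have -> : (1 + 2 * m.+1%:Z + (1 + 2 * m.+1%:Z)) = (2 * (2 * m.+2 - 1))%N%:Z by lia.
  apply => //.
  + move=> b k' Hb; have := HY b k' (ltac:(rewrite /=; lia)); rewrite /Y_rel.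
    have -> : (m.+2 - 2 = m)%N by lia.
    by rewrite ifT //; lia.
  + move=> k'; have := HY m.+1 k' (ltac:(rewrite /=; lia)); rewrite /Y_rel.
    have -> : (m.+2 - 2 = m)%N by lia.
    rewrite ifF; last lia. rewrite /= eqxx.
    have -> : k' - (1 - 2) = k' + 1 by ring.
    have -> : k' + (1 - 2) = k' - 1 by ring.
    by rewrite -addrA [Y m.+2 (k' + 1) + _]addrC.
  + move=> k'; have := HY m.+2 k' (ltac:(rewrite /=; lia)); rewrite /Y_rel.
    have -> : (m.+2 - 2 = m)%N by lia.
    rewrite ifF; last lia. by rewrite ifF; last lia.
-
  case: r hd HY Ha => [|[|m]] // _ HY Ha.
  have := @famW _ Y m 1 2.
  have -> : (2 + 1 * m.+1%:Z + (2 + 1 * m.+1%:Z)) = (2 * m.+3)%N%:Z by lia.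
  apply => //.
  + move=> b k' Hb; have := HY b k' (ltac:(rewrite /=; lia)); rewrite /Y_rel.
    have -> : (m.+2 - 2 = m)%N by lia.
    case: (ltngtP b m.+1) => [lt|gt|->].
    * by rewrite ifT //; lia.
    * lia.
    * by rewrite ltnn ?eqxx /=.
  + move=> k'; have := HY m.+2 k' (ltac:(rewrite /=; lia)); rewrite /Y_rel.
    have -> : (m.+2 - 2 = m)%N by lia.
    rewrite ifF; last lia. rewrite ifF; last lia.
    by have -> : (2 - 1 : int) = 1 by [].
-
  case: r hd HY Ha => [|[|[|n]]] // _ HY Ha.
  have -> : (1 * (2 * n.+3 - 2))%N%:Z = n.+2%:Z + n.+2%:Z by lia.
  apply: (@famD_sl _ Y n) => // b k' Hb; exact: HY.
- apply: (@exc_E _ Y TE6); [by left| move=> b k' Hb; exact: HY | by []].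
- apply: (@exc_E _ Y TE7); [by right; left| move=> b k' Hb; exact: HY | by []].
- apply: (@exc_E _ Y TE8); [by right; right| move=> b k' Hb; exact: HY | by []].
- exact: exc_F4Y.
- exact: exc_G2Y.
Qed.
End Half.

Lemma full (G : zmodType) d (hd : valid_dynkin d) (F : nat -> int -> G) :
  (forall a k, (1 <= a <= rank d)%N ->
     F a (k + (tnum d * hdual d)%N%:Z) = - F (omega d a) k) ->
  forall a k, (1 <= a <= rank d)%N ->
    F a (k + (tnum d * hdual d)%N%:Z) = - F (omega d a) k /\
    F a (k + (2 * (tnum d * hdual d))%N%:Z) = F a k.
Proof.
move=> Hh a k Ha; split; first exact: Hh.
have [Ho Hoo] := omega_ok hd Ha.
by rewrite mul2n -addnn PoszD addrA Hh // Hh // Hoo opprK.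
Qed.

Unset Implicit Arguments.
Theorem theorem8p8 (d : Dynkin) (hd : valid_dynkin d) :
  (forall (G : zmodType) (T : nat -> int -> G), is_T_system d T ->
     forall (a : nat) (k : int), (1 <= a <= rank d)%N ->
       T a (k + (tnum d * hdual d)%N%:Z) = - T (omega d a) k /\
       T a (k + (2 * (tnum d * hdual d))%N%:Z) = T a k) /\
  (forall (G : zmodType) (Y : nat -> int -> G), is_Y_system d Y ->
     forall (a : nat) (k : int), (1 <= a <= rank d)%N ->
       Y a (k + (tnum d * hdual d)%N%:Z) = - Y (omega d a) k /\
       Y a (k + (2 * (tnum d * hdual d))%N%:Z) = Y a k).
Proof.
split=> G F HF; apply: full => //.
  exact: half_T.
exact: half_Y.
Qed.
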